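(* Let $p>1$ be an integer and let $u^{(p)}$ be the fixed point of the substitution $\varphi_p(L)=L^pS$, $\varphi_p(S)=M$, $\varphi_p(M)=L^{p-1}S$. Let $v,w$ be factors of $u^{(p)}$ with $|v|=|w|$. Then $\left||v|_L-|w|_L\right|\le 3$.
   Context: $u^{(p)}=\lim_{n\to\infty}\varphi_p^n(L)$ is the unique infinite word over $\{L,S,M\}$ fixed by $\varphi_p$. A factor is a finite contiguous subword; $|w|$ is the length and $|w|_a$ the number of occurrences of the letter $a$ in $w$. *)

(* Defs.v *)
From HB Require Import structures.
From mathcomp Require Import all_boot.
Set Implicit Arguments. Unset Strict Implicit. Unset Printing Implicit Defensive.

Inductive letter := L | S | M.

Definition letter_eqb (a b : letter) : bool :=
  match a, b with L, L | S, S | M, M => true | _, _ => false end.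
Lemma letter_eqbP : Equality.axiom letter_eqb.
Proof. by case; case; constructor. Qed.
HB.instance Definition _ := hasDecEq.Build letter letter_eqbP.

Definition phi (p : nat) (a : letter) : seq letter :=
  match a with
  | L => rcons (nseq p L) S
  | S => [:: M]
  | M => rcons (nseq p.-1 L) S
  end.

Definition phi_word (p : nat) (w : seq letter) : seq letter :=
  flatten (map (phi p) w).

Definition phi_iter (p n : nat) : seq letter := iter n (phi_word p) [:: L].

Definition is_fixed_point_limit (p : nat) (u : nat -> letter) : Prop :=
  forall n i, i < size (phi_iter p n) -> u i = nth L (phi_iter p n) i.

Definition factor (u : nat -> letter) (i n : nat) : seq letter :=
  mkseq (fun k => u (i + k)) n.

Definition occ (a : letter) (w : seq letter) : nat := count_mem a w.

(* Main.v *)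
Require Import Defs.
From Stdlib Require Import ZArith Lia MSetPositive.
From mathcomp Require Import all_boot.
From mathcomp Require Import zify.

Definition gn (p : nat) (c : letter) : nat :=
  match c with L => p.+1 | S => 1 | M => p end.
Definition nonl (c : letter) : letter := match c with S => M | _ => S end.

Fixpoint cnt (u : nat -> letter) (a : letter) (i : nat) : nat :=
  if i is i'.+1 then cnt u a i' + (u i' == a) else 0.

Fixpoint kr (p : nat) (u : nat -> letter) (i : nat) : nat * nat :=
  if i is i'.+1 then
    let kr' := kr p u i' in
    if kr'.2.+1 < gn p (u kr'.1) then (kr'.1, kr'.2.+1) else (kr'.1.+1, 0)
  else (0, 0).

Fixpoint Bk (p : nat) (u : nat -> letter) (k : nat) : nat :=
  if k is k'.+1 then Bk p u k' + gn p (u k') else 0.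

Lemma phi_word_cons p a w : phi_word p (a :: w) = phi p a ++ phi_word p w.
Proof. by []. Qed.

Lemma size_phi p c : 0 < p -> size (phi p c) = gn p c.
Proof. by case: c => /= hp; rewrite ?size_rcons ?size_nseq //; lia. Qed.

Lemma phi_iter_head p n : 0 < p -> exists rest, phi_iter p n = L :: rest.
Proof.
move=> hp; elim: n => [|n [rest IH]]; first by exists [::].
rewrite /phi_iter iterS -/(phi_iter p n) IH phi_word_cons /=.
case: p hp {IH} => [|p'] //= _.
by eexists.
Qed.

Lemma size_phi_word_ge p w : 0 < p -> size w <= size (phi_word p w).
Proof.
move=> hp; elim: w => [|a w IH] //=.
rewrite phi_word_cons size_cat size_phi //.
have : 0 < gn p a by case: a => /=; lia.
lia.
Qed.

Lemma size_phi_iter p n : 0 < p -> n < size (phi_iter p n).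
Proof.
move=> hp; elim: n => [|n IH] //.
rewrite /phi_iter iterS -/(phi_iter p n).
have [rest E] := phi_iter_head p n hp.
move: IH; rewrite E phi_word_cons size_cat size_phi //= => IH.
have := size_phi_word_ge p rest hp. lia.
Qed.

Lemma nth_phi_word p w t r : 0 < p -> t < size w -> r < gn p (nth L w t) ->
  nth L (phi_word p w) (sumn (map (fun a => gn p a) (take t w)) + r)
  = nth L (phi p (nth L w t)) r.
Proof.
move=> hp; elim: w t => [|a w IH] [|t] //= ht hr.
  by rewrite phi_word_cons nth_cat size_phi // hr.
rewrite phi_word_cons nth_cat size_phi // -addnA.
rewrite ifN; last by lia.
rewrite -IH //; congr nth; lia.
Qed.

Lemma sumn_take_le (f : letter -> nat) t w :
  sumn (map f (take t w)) <= sumn (map f w).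
Proof.
rewrite -{2}(cat_take_drop t w) map_cat sumn_cat; lia.
Qed.

Lemma size_phi_word p w : 0 < p -> size (phi_word p w) = sumn (map (fun a => gn p a) w).
Proof.
move=> hp; elim: w => [|a w IH] //=.
by rewrite phi_word_cons size_cat IH size_phi.
Qed.

Lemma block p u : 1 < p -> is_fixed_point_limit p u ->
  forall k r, r < gn p (u k) -> u (Bk p u k + r) = nth L (phi p (u k)) r.
Proof.
move=> hp hu k r hr.
have hp0 : 0 < p by lia.
set w := phi_iter p k.+1.
have hk : k < size w by have := size_phi_iter p k.+1 hp0; rewrite -/w; lia.
have hw : forall t, t < size w -> u t = nth L w t by move=> t ht; apply: hu.
have hB : forall t, t <= size w -> Bk p u t = sumn (map (fun a => gn p a) (take t w)).
  move=> t; elim: t => [|t IH] ht; first by rewrite take0.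
  rewrite /= IH; last by lia.
  rewrite (take_nth L); last by lia.
  by rewrite -cats1 map_cat sumn_cat /= addn0 hw //; lia.
have huk := hw k hk.
rewrite hB; last by lia.
have hlt : sumn (map (fun a => gn p a) (take k w)) + r < size (phi_iter p k.+2).
  rewrite /phi_iter iterS -/(phi_iter p k.+1) -/w size_phi_word //.
  have := sumn_take_le (fun a => gn p a) k.+1 w.
  rewrite (take_nth L) // -cats1 map_cat sumn_cat /= -huk; lia.
rewrite (hu k.+2 _ hlt) /phi_iter iterS -/(phi_iter p k.+1) -/w.
rewrite nth_phi_word // -huk //.
Qed.

Lemma nth_phi p c r : 0 < p -> r < gn p c ->
  nth L (phi p c) r = if r.+1 < gn p c then L else nonl c.
Proof.
move=> hp; case: c => /= hr.
- rewrite nth_rcons size_nseq nth_nseq.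
  case: ltnP => h1; first by rewrite ltnS h1.
  have -> : r = p by lia.
  by rewrite ltnn eqxx.
- by case: r hr.
- rewrite nth_rcons size_nseq nth_nseq.
  case: ltnP => h1.
    by have -> : r.+1 < p by lia.
  have -> : r = p.-1 by lia.
  by rewrite eqxx prednK // ltnn.
Qed.

Lemma kr_S p u i : kr p u i.+1 =
  if (kr p u i).2.+1 < gn p (u (kr p u i).1) then ((kr p u i).1, (kr p u i).2.+1)
  else ((kr p u i).1.+1, 0).
Proof. by []. Qed.

Lemma kr_inv p u i : 0 < p ->
  i = Bk p u (kr p u i).1 + (kr p u i).2 /\ (kr p u i).2 < gn p (u (kr p u i).1).
Proof.
move=> hp; elim: i => [|i [IH1 IH2]].
  by split => //=; case: (u 0) => /=; lia.
rewrite kr_S; case: ifP => /= h.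
  split => //; lia.
split; first by lia.
by case: (u _) => /=; lia.
Qed.

Lemma kr_letter p u i : 1 < p -> is_fixed_point_limit p u ->
  u i = if (kr p u i).2.+1 < gn p (u (kr p u i).1) then L else nonl (u (kr p u i).1).
Proof.
move=> hp hu.
have hp0 : 0 < p by lia.
have [E1 E2] := kr_inv p u i hp0.
by rewrite {1}E1 block // nth_phi.
Qed.

Lemma u0 p u : is_fixed_point_limit p u -> u 0 = L.
Proof. by move=> hu; rewrite (hu 0 0). Qed.

Lemma Bk_ge p u k : 0 < p -> u 0 = L -> 0 < k -> k + p <= Bk p u k.
Proof.
move=> hp h0.
have hS : forall k, Bk p u k.+1 = Bk p u k + gn p (u k) by [].
elim: k => [|k IH] // _.
rewrite hS.
case: k IH => [|k] IH; first by rewrite h0 /=; lia.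
have : 0 < gn p (u k.+1) by case: (u _) => /=; lia.
have := IH erefl; lia.
Qed.

Lemma kr_lt p u i : 0 < p -> u 0 = L -> 0 < i -> (kr p u i).1 < i.
Proof.
move=> hp h0 hi.
have [E1 E2] := kr_inv p u i hp.
case: (posnP (kr p u i).1) => [->|hk] //.
have := Bk_ge p u _ hp h0 hk. lia.
Qed.

Lemma kr_cnt p u i : 1 < p -> is_fixed_point_limit p u ->
  [/\ cnt u L i = p * cnt u L (kr p u i).1 + p.-1 * cnt u M (kr p u i).1 + (kr p u i).2,
      cnt u S i = cnt u L (kr p u i).1 + cnt u M (kr p u i).1 &
      cnt u M i = cnt u S (kr p u i).1].
Proof.
move=> hp hu; elim: i => [|i [IH1 IH2 IH3]]; first by rewrite /= !muln0.
have hl := kr_letter p u i hp hu.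
have hp0 : 0 < p by lia.
have [E1 E2] := kr_inv p u i hp0.
have cS : forall a j, cnt u a j.+1 = cnt u a j + (u j == a) by [].
rewrite !cS IH1 IH2 IH3 hl kr_S.
case: ifP => /= h; first by split; lia.
move: E2 h; case: (u (kr p u i).1) => /= E2 h; split; nia.
Qed.

Definition lin := (Z * Z)%type.
Definition ladd (x y : lin) : lin := (x.1 + y.1, x.2 + y.2)%Z.
Definition lneg (x : lin) : lin := (- x.1, - x.2)%Z.
Definition lev (x : lin) (p : Z) : Z := (x.1 * p + x.2)%Z.
Definition glin (c : letter) : lin :=
  match c with L => (1,1)%Z | S => (0,1)%Z | M => (1,0)%Z end.

Definition feas (mode : bool) (f h : lin) : bool :=
  if mode then (0 <=? lev f 2)%Z && (0 <=? lev h 2)%Z else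
  let (a1,b1) := f in let (a2,b2) := h in
  [&& ~~ ((a1 =? 0)%Z && (b1 <? 0)%Z), ~~ ((a2 =? 0)%Z && (b2 <? 0)%Z),
      ~~ ((a1 <? 0)%Z && (lev f 3 <? 0)%Z), ~~ ((a2 <? 0)%Z && (lev h 3 <? 0)%Z),
      ~~ [&& (0 <? a1)%Z, (a2 <? 0)%Z & (a1*b2 - a2*b1 <? 0)%Z] &
      ~~ [&& (a1 <? 0)%Z, (0 <? a2)%Z & (a2*b1 - a1*b2 <? 0)%Z]].

Definition state := (Z * Z * Z * letter * letter * letter * letter)%type.
Definition lcode c := (match c with L => 0 | S => 1 | M => 2 end)%Z.
Definition ldec (z:Z) := if (z =? 0)%Z then L else if (z =? 1)%Z then S else M.
Fixpoint wr (n : nat) (z : Z) (k : positive) : positive :=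
  match n with 0 => k | n'.+1 => wr n' (Z.div2 z) (if Z.odd z then xI k else xO k) end.
Fixpoint rd (n : nat) (k : positive) (acc : Z) : Z * positive :=
  match n with 0 => (acc, k) | n'.+1 =>
    match k with xI k' => rd n' k' (2*acc+1)%Z | xO k' => rd n' k' (2*acc)%Z | xH => (acc, xH) end end.
Definition encode (s : state) : positive :=
  let '(a,b,c,c1,c2,c3,c4) := s in
  wr 2 (lcode c4) (wr 2 (lcode c3) (wr 2 (lcode c2) (wr 2 (lcode c1)
    (wr 5 (c+16)%Z (wr 5 (b+16)%Z (wr 5 (a+16)%Z xH)))))).
Definition decode (k : positive) : state :=
  let (x4,k) := rd 2 k 0%Z in let (x3,k) := rd 2 k 0%Z in
  let (x2,k) := rd 2 k 0%Z in let (x1,k) := rd 2 k 0%Z in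
  let (c,k) := rd 5 k 0%Z in let (b,k) := rd 5 k 0%Z in let (a,k) := rd 5 k 0%Z in
  ((a-16)%Z, (b-16)%Z, (c-16)%Z, ldec x1, ldec x2, ldec x3, ldec x4).
Definition state_eqb (s t : state) : bool :=
  let '(a,b,c,c1,c2,c3,c4) := s in let '(a',b',c',d1,d2,d3,d4) := t in
  [&& (a =? a')%Z, (b =? b')%Z, (c =? c')%Z, c1 == d1, c2 == d2, c3 == d3 & c4 == d4].

Local Open Scope positive_scope.
Definition X2_0 : seq positive := [:: 8659200; 8659201; 8659202; 8659204; 8659205; 8659206; 8659208; 8659209; 8659210; 8659216; 8659217; 8659218; 8659220; 8659221; 8659222; 8659224; 8659225; 8659226; 8659232; 8659233; 8659234; 8659236; 8659237; 8659238; 8659240; 8659242; 8659264; 8659265; 8659266; 8659268; 8659269; 8659270; 8659272; 8659273; 8659274; 8659280; 8659281; 8659282; 8659284; 8659285; 8659286; 8659288; 8659289; 8659290; 8659296; 8659297; 8659298; 8659300; 8659301; 8659302; 8659306; 8659328; 8659329; 8659330; 8659332; 8659333; 8659336; 8659337; 8659338; 8659344; 8659345; 8659348; 8659349; 8659352; 8659353; 8659354; 8659360; 8659361; 8659362; 8659364; 8659365; 8659366; 8659368; 8659369; 8659370; 8661248; 8661249; 8661250; 8661253; 8661256; 8661257; 8661258; 8661265; 8661280; 8661281; 8661282; 8661290; 8661312; 8661313; 8661314; 8661316; 8661317; 8661318; 8661320; 8661321; 8661322; 8661328; 8661329; 8661330; 8661338; 8661344; 8661345; 8661346; 8661350; 8661354;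 8661376; 8661377; 8661381; 8661384; 8661385; 8661386; 8661393; 8661401; 8661408; 8661409; 8661410; 8661413; 8661416; 8661417; 8661418; 8662528; 8662530; 8662532; 8662533; 8662534; 8662536; 8662538; 8662544; 8662545; 8662546; 8662548; 8662549; 8662550; 8662552; 8662553; 8662554; 8662560; 8662562; 8662564; 8662565; 8662566; 8662570; 8662596; 8662608; 8662612; 8662616; 8662618; 8662628; 8662630; 8662656; 8662660; 8662664; 8662666; 8662672; 8662676; 8662680; 8662681; 8662682; 8662688; 8662690; 8662692; 8662693; 8662694; 8662696; 8662698; 8663296; 8663297; 8663298; 8663300; 8663301; 8663302; 8663304; 8663305; 8663306; 8663312; 8663313; 8663314; 8663317; 8663320; 8663321; 8663322; 8663328; 8663329; 8663330; 8663332; 8663333; 8663334; 8663336; 8663338; 8663360; 8663361; 8663362; 8663364; 8663365; 8663366; 8663368; 8663369; 8663370; 8663376; 8663377; 8663378; 8663380; 8663381; 8663382; 8663384; 8663385; 8663386; 8663392; 8663393; 8663394; 8663396; 8663397; 8663398; 8663402; 8663424; 8663425; 8663426; 8663428; 8663429; 8663432; 8663433; 8663434; 8663440; 8663441; 8663445; 8663448; 8663449; 8663450; 8663456; 8663457; 8663458; 8663460; 8663461; 8663462; 8663464; 8663465; 8663466; 8664580; 8664592; 8664596; 8664600; 8664602; 8664612; 8664614; 8664728; 8664740; 8665345; 8665408; 8665409; 8665410; 8665418; 8665442; 8665473; 8665481; 8665505; 8666624; 8666625; 8666626; 8666628; 8666629; 8666630; 8666632; 8666633; 8666634; 8666640;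 8666641; 8666642; 8666644; 8666645; 8666646; 8666648; 8666649; 8666650; 8666656; 8666657; 8666658; 8666660; 8666661; 8666662; 8666664; 8666666; 8666688; 8666690; 8666692; 8666693; 8666694; 8666696; 8666698; 8666704; 8666705; 8666706; 8666708; 8666709; 8666710; 8666712; 8666713; 8666714; 8666720; 8666722; 8666724; 8666725; 8666726; 8666730; 8666752; 8666753; 8666754; 8666756; 8666757; 8666760; 8666761; 8666762; 8666768; 8666769; 8666772; 8666773; 8666776; 8666777; 8666778; 8666784; 8666785; 8666786; 8666788; 8666789; 8666790; 8666792; 8666793; 8666794; 8724736; 8724738; 8724740; 8724742; 8724752; 8724754; 8724758; 8724802; 8724806; 8724818; 8724822; 8724864; 8724865; 8724866; 8724868; 8724869; 8724870; 8724874; 8724880; 8724881; 8724882; 8724884; 8724885; 8724886; 8724890; 8724898; 8724902; 8726786; 8726850; 8726912; 8726913; 8726914; 8726918; 8726922; 8726930; 8726946; 8728070; 8728082; 8728086; 8728196; 8728198; 8728208; 8728210; 8728212; 8728214; 8728832; 8728834; 8728838; 8728850; 8728898; 8728902; 8728914; 8728960; 8728961; 8728962; 8728964; 8728965; 8728966; 8728970; 8728976; 8728977; 8728978; 8728982; 8728986; 8728994; 8728998; 8731010; 8732160; 8732162; 8732164; 8732166; 8732176; 8732178].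
Definition X2_1 : seq positive := [:: 8732180; 8732182; 8732230; 8732242; 8732246; 8732288; 8732290; 8732292; 8732293; 8732294; 8732298; 8732304; 8732305; 8732306; 8732308; 8732309; 8732310; 8732314; 8732322; 8732326; 8765696; 8765697; 8765704; 8765705; 8765720; 8765721; 8765728; 8765729; 8765732; 8765733; 8765736; 8765737; 8765738; 8765760; 8765768; 8765769; 8765784; 8765785; 8765792; 8765793; 8765796; 8765797; 8765800; 8765801; 8765802; 8765864; 8765865; 8767753; 8767777; 8767785; 8767816; 8767817; 8767840; 8767841; 8767848; 8767849; 8769032; 8769048; 8769056; 8769060; 8769064; 8769065; 8769066; 8769128; 8769192; 8769792; 8769793; 8769800; 8769801; 8769817; 8769824; 8769825; 8769829; 8769832; 8769833; 8769834; 8769856; 8769857; 8769864; 8769865; 8769880; 8769881; 8769888; 8769889; 8769892; 8769893; 8769896; 8769897; 8769898; 8769960; 8769961; 8771112; 8773120; 8773128; 8773129; 8773144; 8773145; 8773152; 8773153; 8773156; 8773157; 8773160; 8773161; 8773162; 8773192; 8773208; 8773216; 8773220; 8773224; 8773225; 8773226; 8773288; 8773289; 8790272; 8790273; 8790274; 8790276; 8790277; 8790278; 8790280; 8790282; 8790288; 8790289; 8790290; 8790292; 8790293; 8790294; 8790296; 8790298; 8790304; 8790306; 8790308; 8790310; 8790336; 8790337; 8790338; 8790340; 8790341; 8790342; 8790346; 8790352; 8790353; 8790354; 8790356; 8790357; 8790358; 8790362; 8790370; 8790374; 8790400; 8790401; 8790402; 8790404; 8790405; 8790406; 8790408; 8790409;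 8790410; 8790416; 8790417; 8790418; 8790420; 8790421; 8790422; 8790424; 8790425; 8790426; 8790432; 8790433; 8790434; 8790436; 8790437; 8790438; 8790442; 8792320; 8792321; 8792322; 8792326; 8792330; 8792338; 8792354; 8792384; 8792385; 8792386; 8792390; 8792394; 8792402; 8792418; 8792448; 8792449; 8792450; 8792452; 8792453; 8792454; 8792456; 8792457; 8792458; 8792464; 8792465; 8792466; 8792474; 8792480; 8792481; 8792482; 8792486; 8792490; 8793600; 8793602; 8793604; 8793606; 8793610; 8793616; 8793618; 8793620; 8793621; 8793622; 8793626; 8793634; 8793638; 8793684; 8793686; 8793728; 8793730; 8793732; 8793734; 8793736; 8793738; 8793744; 8793746; 8793748; 8793749; 8793750; 8793752; 8793754; 8793760; 8793762; 8793764; 8793766; 8794368; 8794369; 8794370; 8794372; 8794373; 8794374; 8794376; 8794378; 8794384; 8794385; 8794386; 8794390; 8794394; 8794400; 8794402; 8794406; 8794432; 8794433; 8794434; 8794436; 8794437; 8794438; 8794442; 8794448; 8794449; 8794450; 8794454; 8794458; 8794466; 8794470; 8794496; 8794497; 8794498; 8794500; 8794501; 8794502; 8794504; 8794505; 8794506; 8794512; 8794513; 8794514; 8794516; 8794517; 8794518; 8794520; 8794521; 8794522; 8794528; 8794529; 8794530; 8794532; 8794533; 8794534; 8794538; 8795668; 8795670; 8795796; 8796418; 8796482; 8796544; 8796545; 8796546; 8796554; 8796578; 8797696; 8797697; 8797698; 8797700; 8797701; 8797702; 8797704; 8797706; 8797712; 8797713; 8797714; 8797716; 8797717; 8797718;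 8797720; 8797722; 8797728; 8797730; 8797732; 8797734; 8797760; 8797762; 8797764; 8797766; 8797770; 8797776; 8797778; 8797780; 8797781; 8797782; 8797786; 8797794; 8797798; 8797824; 8797825; 8797826; 8797828; 8797829; 8797830; 8797832; 8797833; 8797834; 8797840; 8797841; 8797842; 8797844; 8797845; 8797846; 8797848; 8797849; 8797850; 8797856; 8797857; 8797858; 8797860; 8797861; 8797862; 8797866; 8831272; 8831273; 8831336; 8831337; 8834600; 8835368; 8835369; 8835432; 8835433; 8838696; 8838697; 8838760; 8855938; 8855942; 8855954; 8855958; 8857986; 8860034; 8860038; 8860050; 8863362; 8863366; 8863378; 8863382; 8896768; 8896769; 8896770; 8896772; 8896773; 8896776; 8896777; 8896778; 8896784; 8896785; 8896788; 8896789; 8896792; 8896793; 8896794].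
Definition X2_2 : seq positive := [:: 8896800; 8896801; 8896802; 8896804; 8896805; 8896806; 8896808; 8896809; 8896810; 8896832; 8896833; 8896834; 8896836; 8896837; 8896840; 8896841; 8896842; 8896848; 8896849; 8896852; 8896853; 8896856; 8896857; 8896858; 8896864; 8896865; 8896866; 8896868; 8896869; 8896870; 8896872; 8896873; 8896874; 8896896; 8896897; 8896904; 8896905; 8896920; 8896921; 8896928; 8896929; 8896932; 8896933; 8896936; 8896937; 8896938; 8898816; 8898817; 8898824; 8898825; 8898826; 8898848; 8898849; 8898850; 8898856; 8898857; 8898858; 8898880; 8898881; 8898885; 8898888; 8898889; 8898890; 8898897; 8898905; 8898912; 8898913; 8898914; 8898917; 8898920; 8898921; 8898922; 8898952; 8898953; 8898976; 8898977; 8898984; 8898985; 8900096; 8900100; 8900104; 8900105; 8900106; 8900112; 8900116; 8900120; 8900121; 8900122; 8900128; 8900129; 8900130; 8900132; 8900133; 8900134; 8900136; 8900137; 8900138; 8900168; 8900184; 8900192; 8900196; 8900200; 8900202; 8900232; 8900248; 8900256; 8900260; 8900264; 8900265; 8900266; 8900864; 8900865; 8900866; 8900868; 8900869; 8900872; 8900873; 8900874; 8900880; 8900881; 8900888; 8900889; 8900890; 8900896; 8900897; 8900898; 8900900; 8900901; 8900902; 8900904; 8900905; 8900906; 8900928; 8900929; 8900930; 8900932; 8900933; 8900936; 8900937; 8900938; 8900944; 8900945; 8900949; 8900952; 8900953; 8900954; 8900960; 8900961; 8900962; 8900964; 8900965; 8900966; 8900968; 8900969; 8900970; 8900992; 8900993;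 8901000; 8901001; 8901016; 8901017; 8901024; 8901025; 8901028; 8901029; 8901032; 8901033; 8901034; 8902152; 8902168; 8902176; 8902180; 8902184; 8902186; 8902312; 8902977; 8902985; 8903009; 8904192; 8904193; 8904194; 8904196; 8904197; 8904200; 8904201; 8904202; 8904208; 8904209; 8904212; 8904213; 8904216; 8904217; 8904218; 8904224; 8904225; 8904226; 8904228; 8904229; 8904230; 8904232; 8904233; 8904234; 8904256; 8904260; 8904264; 8904265; 8904266; 8904272; 8904276; 8904280; 8904281; 8904282; 8904288; 8904289; 8904290; 8904292; 8904293; 8904294; 8904296; 8904297; 8904298; 8904320; 8904328; 8904329; 8904344; 8904345; 8904352; 8904353; 8904356; 8904357; 8904360; 8904361; 8904362; 9707776; 9707784; 9707785; 9707800; 9707801; 9707808; 9707809; 9707812; 9707813; 9707816; 9707817; 9707818; 9707848; 9707864; 9707872; 9707876; 9707880; 9707881; 9707882; 9707944; 9707945; 9711144; 9711872; 9711873; 9711880; 9711881; 9711896; 9711897; 9711904; 9711905; 9711908; 9711909; 9711912; 9711913; 9711914; 9711936; 9711944; 9711945; 9711960; 9711961; 9711968; 9711969; 9711972; 9711973; 9711976; 9711977; 9711978; 9712040; 9712041; 9715208; 9715224; 9715232; 9715236; 9715240; 9715241; 9715242; 9715304; 9715368; 9776644; 9776656; 9776660; 9776664; 9776666; 9776676; 9776678; 9776792; 9776804; 9780736; 9780738; 9780740; 9780741; 9780742; 9780744; 9780746; 9780752; 9780753; 9780754; 9780756; 9780757; 9780758; 9780760; 9780761; 9780762; 9780768;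 9780770; 9780772; 9780773; 9780774; 9780776; 9780778; 9780804; 9780816; 9780820; 9780824; 9780826; 9780836; 9780838; 9780864; 9780868; 9780872; 9780874; 9780880; 9780884; 9780888; 9780889; 9780890; 9780896; 9780898; 9780900; 9780901; 9780902; 9780904; 9780906; 9838848; 9838849; 9838850; 9838852; 9838853; 9838856; 9838857; 9838858; 9838864; 9838865; 9838868; 9838869; 9838872; 9838873; 9838874; 9838880; 9838881; 9838882; 9838884; 9838885; 9838886; 9838888; 9838889; 9838890; 9838912; 9838916; 9838920; 9838921; 9838922; 9838928; 9838932; 9838936; 9838937; 9838938; 9838944; 9838945; 9838946; 9838948; 9838949; 9838950; 9838952; 9838953; 9838954; 9838976; 9838984; 9838985; 9839000; 9839001; 9839008; 9839009; 9839012; 9839013; 9839016; 9839017].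
Definition X2_3 : seq positive := [:: 9839018; 9842184; 9842200; 9842208; 9842212; 9842216; 9842218; 9842344; 9846272; 9846276; 9846280; 9846281; 9846282; 9846288; 9846292; 9846296; 9846297; 9846298; 9846304; 9846305; 9846306; 9846308; 9846309; 9846310; 9846312; 9846313; 9846314; 9846344; 9846360; 9846368; 9846372; 9846376; 9846378; 9846408; 9846424; 9846432; 9846436; 9846440; 9846441; 9846442; 9907732; 9907734; 9907860; 9945384; 9945385; 9945448; 9949480; 9949481; 9949544; 9949545; 9952808; 9969920; 9969922; 9969926; 9969938; 9969986; 9969990; 9970002; 9970048; 9970049; 9970050; 9970052; 9970053; 9970054; 9970058; 9970064; 9970065; 9970066; 9970070; 9970074; 9970082; 9970086; 9972098; 9974018; 9974082; 9974144; 9974145; 9974146; 9974150; 9974154; 9974162; 9974178; 9977344; 9977346; 9977348; 9977350; 9977360; 9977362; 9977366; 9977410; 9977414; 9977426; 9977430; 9977472; 9977473; 9977474; 9977476; 9977477; 9977478; 9977482; 9977488; 9977489; 9977490; 9977492; 9977493; 9977494; 9977498; 9977506; 9977510; 10078465; 10078528; 10078529; 10078530; 10078538; 10078562; 10078593; 10078601; 10078625; 10080512; 10080513; 10080514; 10080517; 10080520; 10080521; 10080522; 10080529; 10080544; 10080545; 10080546; 10080554; 10080576; 10080577; 10080578; 10080580; 10080581; 10080582; 10080584; 10080585; 10080586; 10080592; 10080593; 10080594; 10080602; 10080608; 10080609; 10080610; 10080614; 10080618; 10080640; 10080641; 10080642; 10080645; 10080648; 10080649; 10080650; 10080657; 10080665;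 10080672; 10080673; 10080674; 10080677; 10080680; 10080681; 10080682; 10101122; 10101126; 10101138; 10105218; 10108546; 10108550; 10108562; 10108566; 10144065; 10144073; 10144097; 10207488; 10207489; 10207490; 10207492; 10207493; 10207494; 10207496; 10207498; 10207504; 10207505; 10207506; 10207510; 10207514; 10207520; 10207522; 10207526; 10207552; 10207553; 10207554; 10207556; 10207557; 10207558; 10207562; 10207568; 10207569; 10207570; 10207574; 10207578; 10207586; 10207590; 10207616; 10207617; 10207618; 10207620; 10207621; 10207622; 10207624; 10207625; 10207626; 10207632; 10207633; 10207634; 10207636; 10207637; 10207638; 10207640; 10207641; 10207642; 10207648; 10207649; 10207650; 10207652; 10207653; 10207654; 10207658; 10209538; 10209602; 10209664; 10209665; 10209666; 10209674; 10209698; 10211584; 10211585; 10211586; 10211590; 10211594; 10211602; 10211618; 10211648; 10211649; 10211650; 10211654; 10211658; 10211666; 10211682; 10211712; 10211713; 10211714; 10211716; 10211717; 10211718; 10211720; 10211721; 10211722; 10211728; 10211729; 10211730; 10211738; 10211744; 10211745; 10211746; 10211750; 10211754; 10756352; 10756353; 10756354; 10756356; 10756357; 10756360; 10756361; 10756362; 10756368; 10756369; 10756372; 10756373; 10756376; 10756377; 10756378; 10756384; 10756385; 10756386; 10756388; 10756389; 10756390; 10756392; 10756393; 10756394; 10756416; 10756417; 10756418; 10756420; 10756421; 10756424; 10756425; 10756426; 10756432; 10756433; 10756436; 10756440; 10756441; 10756442; 10756448; 10756449; 10756450; 10756452; 10756453; 10756454; 10756456; 10756457; 10756458; 10756480;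 10756481; 10756488; 10756489; 10756504; 10756505; 10756512; 10756513; 10756516; 10756517; 10756520; 10756521; 10756522; 10758400; 10758401; 10758405; 10758408; 10758409; 10758410; 10758417; 10758425; 10758432; 10758433; 10758434; 10758437; 10758440; 10758441; 10758442; 10758464; 10758465; 10758468; 10758469; 10758472; 10758473; 10758474; 10758480; 10758481; 10758488; 10758489; 10758496; 10758497; 10758498; 10758500; 10758501; 10758504; 10758505; 10758506; 10758536; 10758537; 10758560; 10758561; 10758568; 10758569; 10759680; 10759684; 10759688; 10759690; 10759696; 10759704; 10759712; 10759714; 10759716; 10759720; 10759722; 10759816; 10759840; 10759848; 10760448; 10760449; 10760450; 10760452; 10760453; 10760456; 10760457; 10760458; 10760464; 10760465; 10760469; 10760472; 10760473; 10760474; 10760480; 10760481; 10760482].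
Definition X2_4 : seq positive := [:: 10760484; 10760485; 10760486; 10760488; 10760489; 10760490; 10760512; 10760513; 10760514; 10760516; 10760517; 10760520; 10760521; 10760522; 10760528; 10760529; 10760532; 10760533; 10760536; 10760537; 10760538; 10760544; 10760545; 10760546; 10760548; 10760549; 10760550; 10760552; 10760553; 10760554; 10760576; 10760577; 10760584; 10760585; 10760600; 10760601; 10760608; 10760609; 10760612; 10760613; 10760616; 10760617; 10760618; 10762497; 10762505; 10762529; 10762537; 10762560; 10762561; 10762568; 10762569; 10762570; 10762592; 10762593; 10762594; 10762600; 10762601; 10762602; 10762633; 10762657; 10762665; 10763776; 10763777; 10763778; 10763780; 10763781; 10763784; 10763785; 10763786; 10763792; 10763793; 10763796; 10763800; 10763801; 10763802; 10763808; 10763809; 10763810; 10763812; 10763813; 10763814; 10763816; 10763817; 10763818; 10763840; 10763844; 10763848; 10763850; 10763856; 10763864; 10763872; 10763874; 10763876; 10763880; 10763882; 10763904; 10763912; 10763913; 10763928; 10763936; 10763937; 10763940; 10763944; 10763945; 10763946; 10796678; 10796690; 10796694; 10821888; 10821889; 10821890; 10821892; 10821893; 10821894; 10821896; 10821898; 10821904; 10821905; 10821906; 10821908; 10821909; 10821910; 10821912; 10821914; 10821920; 10821922; 10821924; 10821926; 10821952; 10821954; 10821956; 10821957; 10821958; 10821962; 10821968; 10821969; 10821970; 10821972; 10821973; 10821974; 10821978; 10821986; 10821990; 10822016; 10822017; 10822018; 10822020; 10822021; 10822022; 10822024; 10822025; 10822026; 10822032; 10822033; 10822034; 10822036; 10822037;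 10822038; 10822040; 10822041; 10822042; 10822048; 10822049; 10822050; 10822052; 10822053; 10822054; 10822058; 10825220; 10825222; 10825232; 10825234; 10825236; 10825238; 10825242; 10825254; 10825348; 10825350; 10825360; 10825362; 10825364; 10825368; 10825370; 10825380; 10825382; 10825984; 10825985; 10825986; 10825988; 10825989; 10825990; 10825992; 10825993; 10825994; 10826000; 10826001; 10826002; 10826004; 10826005; 10826006; 10826008; 10826010; 10826016; 10826017; 10826018; 10826020; 10826022; 10826026; 10826048; 10826049; 10826050; 10826052; 10826053; 10826054; 10826056; 10826058; 10826064; 10826065; 10826066; 10826068; 10826069; 10826070; 10826074; 10826080; 10826082; 10826086; 10826112; 10826113; 10826114; 10826116; 10826117; 10826118; 10826120; 10826121; 10826122; 10826128; 10826129; 10826130; 10826132; 10826133; 10826134; 10826136; 10826137; 10826138; 10826144; 10826145; 10826146; 10826148; 10826149; 10826150; 10826152; 10826154; 10829312; 10829314; 10829316; 10829317; 10829318; 10829320; 10829322; 10829328; 10829329; 10829330; 10829332; 10829333; 10829334; 10829336; 10829338; 10829344; 10829346; 10829348; 10829350; 10829380; 10829382; 10829392; 10829394; 10829396; 10829398; 10829402; 10829414; 10829440; 10829442; 10829444; 10829445; 10829446; 10829448; 10829450; 10829456; 10829457; 10829458; 10829460; 10829461; 10829462; 10829464; 10829465; 10829466; 10829472; 10829474; 10829476; 10829477; 10829478; 10829482; 10862888; 10862889; 10862952; 10866984; 10866985; 10867048; 10867049; 10870312; 10887424; 10887425; 10887426; 10887428; 10887429; 10887430; 10887432; 10887433;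 10887434; 10887440; 10887441; 10887442; 10887444; 10887445; 10887446; 10887448; 10887449; 10887450; 10887456; 10887457; 10887458; 10887460; 10887461; 10887462; 10887464; 10887466; 10887488; 10887489; 10887490; 10887492; 10887493; 10887494; 10887496; 10887497; 10887498; 10887504; 10887505; 10887506; 10887508; 10887509; 10887510; 10887512; 10887513; 10887514; 10887520; 10887521; 10887522; 10887524; 10887525; 10887526; 10887530; 10887552; 10887553; 10887554; 10887556; 10887557; 10887560; 10887561; 10887562; 10887568; 10887569; 10887572; 10887573; 10887576; 10887577; 10887578; 10887584; 10887585; 10887586; 10887588; 10887589; 10887590; 10887592; 10887593; 10887594; 10889472; 10889473; 10889474; 10889476; 10889477; 10889478; 10889480; 10889481; 10889482; 10889488; 10889489; 10889490; 10889496; 10889497; 10889498; 10889504].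
Definition X2_5 : seq positive := [:: 10889505; 10889506; 10889508; 10889509; 10889510; 10889512; 10889514; 10889536; 10889537; 10889538; 10889540; 10889541; 10889542; 10889544; 10889545; 10889546; 10889552; 10889553; 10889554; 10889560; 10889561; 10889562; 10889568; 10889569; 10889570; 10889572; 10889573; 10889574; 10889578; 10889600; 10889601; 10889604; 10889605; 10889608; 10889609; 10889610; 10889616; 10889617; 10889624; 10889625; 10889632; 10889633; 10889634; 10889636; 10889637; 10889640; 10889641; 10889642; 10890752; 10890754; 10890756; 10890758; 10890760; 10890762; 10890768; 10890770; 10890772; 10890776; 10890778; 10890784; 10890786; 10890788; 10890790; 10890794; 10890880; 10890884; 10890888; 10890890; 10890896; 10890904; 10890912; 10890914; 10890916; 10890920; 10890922; 10891520; 10891521; 10891522; 10891524; 10891525; 10891526; 10891528; 10891529; 10891530; 10891536; 10891537; 10891538; 10891540; 10891541; 10891542; 10891544; 10891545; 10891546; 10891552; 10891553; 10891554; 10891556; 10891557; 10891558; 10891560; 10891561; 10891562; 10891584; 10891585; 10891586; 10891588; 10891589; 10891590; 10891592; 10891593; 10891594; 10891600; 10891601; 10891602; 10891604; 10891605; 10891606; 10891608; 10891609; 10891610; 10891616; 10891617; 10891618; 10891620; 10891621; 10891622; 10891624; 10891626; 10891648; 10891649; 10891650; 10891652; 10891653; 10891656; 10891657; 10891658; 10891664; 10891665; 10891668; 10891669; 10891672; 10891673; 10891674; 10891680; 10891681; 10891682; 10891684; 10891685; 10891686; 10891688; 10891689; 10891690; 10894848; 10894849; 10894850; 10894852; 10894853;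 10894854; 10894856; 10894857; 10894858; 10894864; 10894865; 10894866; 10894868; 10894869; 10894870; 10894872; 10894873; 10894874; 10894880; 10894881; 10894882; 10894884; 10894885; 10894886; 10894888; 10894890; 10894912; 10894914; 10894916; 10894918; 10894920; 10894922; 10894928; 10894930; 10894932; 10894936; 10894938; 10894944; 10894946; 10894948; 10894950; 10894954; 10894976; 10894977; 10894978; 10894980; 10894981; 10894984; 10894985; 10894986; 10894992; 10894993; 10894996; 10895000; 10895001; 10895002; 10895008; 10895009; 10895010; 10895012; 10895013; 10895014; 10895016; 10895017; 10895018; 10952960; 10952962; 10952964; 10952966; 10952976; 10952978; 10952980; 10952982; 10953026; 10953030; 10953042; 10953046; 10953088; 10953089; 10953090; 10953092; 10953093; 10953094; 10953098; 10953104; 10953105; 10953106; 10953108; 10953109; 10953110; 10953114; 10953122; 10953126; 10956310; 10956436; 10956438; 10960384; 10960386; 10960388; 10960390; 10960400; 10960402; 10960404; 10960406; 10960470; 10960512; 10960514; 10960516; 10960518; 10960522; 10960528; 10960530; 10960532; 10960533; 10960534; 10960538; 10960546; 10960550; 10993920; 10993921; 10993928; 10993929; 10993944; 10993945; 10993952; 10993953; 10993956; 10993957; 10993960; 10993961; 10993962; 10993984; 10993992; 10993993; 10994008; 10994016; 10994017; 10994020; 10994024; 10994025; 10994026; 10994088; 10994089; 10995976; 10995977; 10996000; 10996001; 10996008; 10996009; 10996040; 10996041; 10996064; 10996065; 10996072; 10996073; 10997256; 10997280; 10997288; 10998016; 10998017; 10998024; 10998025; 10998040; 10998041; 10998048;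 10998049; 10998052; 10998053; 10998056; 10998057; 10998058; 10998080; 10998081; 10998088; 10998089; 10998104; 10998105; 10998112; 10998113; 10998116; 10998117; 10998120; 10998121; 10998122; 10998184; 10998185; 11000137; 11000161; 11000169; 11001344; 11001352; 11001353; 11001368; 11001376; 11001377; 11001380; 11001384; 11001385; 11001386; 11001416; 11001440; 11001448; 11001512; 12067072; 12067073; 12067074; 12067076; 12067077; 12067078; 12067080; 12067082; 12067088; 12067089; 12067090; 12067092; 12067093; 12067094; 12067096; 12067098; 12067104; 12067106; 12067108; 12067110; 12067136; 12067137; 12067138; 12067140; 12067141; 12067142; 12067146; 12067152; 12067153; 12067154; 12067156; 12067158; 12067162; 12067170; 12067174; 12067200; 12067201; 12067202; 12067204; 12067205; 12067206; 12067208; 12067209; 12067210; 12067216].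
Definition X2_6 : seq positive := [:: 12067217; 12067218; 12067220; 12067221; 12067222; 12067224; 12067225; 12067226; 12067232; 12067233; 12067234; 12067236; 12067237; 12067238; 12067242; 12069120; 12069121; 12069122; 12069130; 12069154; 12069184; 12069186; 12069248; 12069249; 12069250; 12069256; 12069258; 12069280; 12069282; 12070400; 12070402; 12070404; 12070405; 12070406; 12070410; 12070416; 12070417; 12070418; 12070420; 12070421; 12070422; 12070426; 12070434; 12070438; 12070468; 12070470; 12070480; 12070482; 12070484; 12070486; 12070528; 12070530; 12070532; 12070533; 12070534; 12070536; 12070538; 12070544; 12070545; 12070546; 12070548; 12070549; 12070550; 12070552; 12070554; 12070560; 12070562; 12070564; 12070566; 12071168; 12071169; 12071170; 12071172; 12071173; 12071174; 12071176; 12071178; 12071184; 12071185; 12071186; 12071194; 12071200; 12071202; 12071206; 12071232; 12071233; 12071234; 12071236; 12071238; 12071242; 12071248; 12071250; 12071266; 12071296; 12071297; 12071298; 12071300; 12071301; 12071302; 12071304; 12071305; 12071306; 12071312; 12071313; 12071314; 12071320; 12071322; 12071328; 12071329; 12071330; 12071332; 12071334; 12071338; 12072452; 12072454; 12072464; 12072466; 12072468; 12072470; 12072474; 12072486; 12072580; 12072582; 12072592; 12072594; 12072596; 12072598; 12072600; 12072602; 12072612; 12072614; 12074496; 12074497; 12074498; 12074500; 12074501; 12074502; 12074504; 12074506; 12074512; 12074513; 12074514; 12074516; 12074517; 12074518; 12074520; 12074522; 12074528; 12074530; 12074532; 12074534; 12074560; 12074562; 12074564; 12074565; 12074566; 12074570;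 12074576; 12074577; 12074578; 12074580; 12074581; 12074582; 12074586; 12074594; 12074598; 12074624; 12074625; 12074626; 12074628; 12074629; 12074630; 12074632; 12074633; 12074634; 12074640; 12074641; 12074642; 12074644; 12074645; 12074646; 12074648; 12074649; 12074650; 12074656; 12074657; 12074658; 12074660; 12074661; 12074662; 12074666; 12112169; 12112232; 12112233; 12132738; 12132742; 12132754; 12136834; 12140162; 12140166; 12140178; 12140182; 12173568; 12173569; 12173570; 12173572; 12173573; 12173576; 12173577; 12173578; 12173584; 12173585; 12173589; 12173592; 12173593; 12173594; 12173600; 12173601; 12173602; 12173604; 12173605; 12173606; 12173608; 12173609; 12173610; 12173632; 12173633; 12173634; 12173636; 12173637; 12173640; 12173641; 12173642; 12173648; 12173649; 12173652; 12173653; 12173656; 12173657; 12173658; 12173664; 12173665; 12173666; 12173668; 12173669; 12173670; 12173672; 12173673; 12173674; 12173696; 12173697; 12173704; 12173705; 12173720; 12173721; 12173728; 12173729; 12173732; 12173733; 12173736; 12173737; 12173738; 12175617; 12175625; 12175649; 12175657; 12175680; 12175681; 12175688; 12175689; 12175690; 12175712; 12175713; 12175714; 12175720; 12175722; 12175753; 12175777; 12175785; 12177664; 12177665; 12177666; 12177669; 12177672; 12177673; 12177674; 12177681; 12177689; 12177696; 12177697; 12177698; 12177701; 12177704; 12177705; 12177706; 12177728; 12177729; 12177730; 12177732; 12177733; 12177736; 12177737; 12177738; 12177744; 12177745; 12177752; 12177753; 12177754; 12177760; 12177761; 12177762; 12177764; 12177765; 12177766; 12177768; 12177769; 12177770;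 12177792; 12177793; 12177800; 12177801; 12177817; 12177824; 12177825; 12177829; 12177832; 12177833; 12177834; 12180992; 12180993; 12180994; 12180996; 12180997; 12180998; 12181000; 12181001; 12181002; 12181008; 12181009; 12181010; 12181012; 12181013; 12181016; 12181017; 12181018; 12181024; 12181025; 12181026; 12181028; 12181029; 12181030; 12181032; 12181033; 12181034; 12181056; 12181057; 12181058; 12181060; 12181061; 12181064; 12181065; 12181066; 12181072; 12181073; 12181076; 12181077; 12181080; 12181081; 12181082; 12181088; 12181089; 12181090; 12181092; 12181093; 12181094; 12181096; 12181097; 12181098; 12181120; 12181121; 12181124; 12181128; 12181129; 12181130; 12181136; 12181144; 12181145; 12181152; 12181153; 12181154; 12181156; 12181157; 12181160; 12181161; 12181162; 12198144; 12198146; 12198148; 12198150; 12198160].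
Definition X2_7 : seq positive := [:: 12198162; 12198166; 12198210; 12198214; 12198226; 12198272; 12198273; 12198274; 12198276; 12198277; 12198278; 12198282; 12198288; 12198289; 12198290; 12198292; 12198294; 12198298; 12198306; 12198310; 12200194; 12200320; 12200322; 12201474; 12201478; 12201490; 12201494; 12201600; 12201602; 12201604; 12201606; 12201616; 12201618; 12201620; 12201622; 12202240; 12202242; 12202246; 12202258; 12202306; 12202368; 12202369; 12202370; 12202372; 12202374; 12202378; 12202384; 12202386; 12202402; 12203542; 12203668; 12203670; 12205568; 12205570; 12205572; 12205574; 12205584; 12205586; 12205588; 12205590; 12205634; 12205638; 12205650; 12205654; 12205696; 12205697; 12205698; 12205700; 12205701; 12205702; 12205706; 12205712; 12205713; 12205714; 12205716; 12205717; 12205718; 12205722; 12205730; 12205734; 12239104; 12239105; 12239112; 12239113; 12239128; 12239129; 12239136; 12239137; 12239140; 12239141; 12239144; 12239145; 12239146; 12239168; 12239169; 12239176; 12239177; 12239192; 12239193; 12239200; 12239201; 12239204; 12239205; 12239208; 12239209; 12239210; 12239272; 12239273; 12241225; 12241249; 12241257; 12243200; 12243201; 12243208; 12243209; 12243232; 12243233; 12243240; 12243241; 12243242; 12243264; 12243265; 12243272; 12243273; 12243289; 12243296; 12243297; 12243301; 12243304; 12243305; 12243306; 12243368; 12243369; 12304640; 12304641; 12304642; 12304644; 12304645; 12304646; 12304648; 12304649; 12304650; 12304656; 12304657; 12304658; 12304660; 12304661; 12304662; 12304664; 12304665; 12304666; 12304672; 12304673; 12304674; 12304676; 12304677; 12304678;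 12304680; 12304682; 12304704; 12304705; 12304706; 12304708; 12304709; 12304710; 12304712; 12304713; 12304714; 12304720; 12304721; 12304722; 12304724; 12304725; 12304726; 12304728; 12304729; 12304730; 12304736; 12304737; 12304738; 12304740; 12304741; 12304742; 12304746; 12304768; 12304769; 12304770; 12304772; 12304773; 12304776; 12304777; 12304778; 12304784; 12304785; 12304788; 12304789; 12304792; 12304793; 12304794; 12304800; 12304801; 12304802; 12304804; 12304805; 12304806; 12304808; 12304809; 12304810; 12306688; 12306689; 12306690; 12306696; 12306697; 12306698; 12306720; 12306721; 12306722; 12306730; 12306752; 12306753; 12306754; 12306760; 12306762; 12306784; 12306786; 12306816; 12306817; 12306824; 12306825; 12306826; 12306848; 12306849; 12306850; 12306856; 12306858; 12307968; 12307969; 12307970; 12307972; 12307973; 12307974; 12307976; 12307977; 12307978; 12307984; 12307985; 12307986; 12307988; 12307989; 12307990; 12307992; 12307993; 12307994; 12308000; 12308001; 12308002; 12308004; 12308005; 12308006; 12308010; 12308032; 12308034; 12308036; 12308038; 12308040; 12308042; 12308048; 12308050; 12308052; 12308054; 12308056; 12308058; 12308064; 12308066; 12308068; 12308070; 12308096; 12308097; 12308098; 12308100; 12308101; 12308104; 12308105; 12308106; 12308112; 12308113; 12308116; 12308117; 12308120; 12308121; 12308122; 12308128; 12308129; 12308130; 12308132; 12308133; 12308134; 12308136; 12308138; 12308736; 12308737; 12308738; 12308740; 12308741; 12308742; 12308744; 12308745; 12308746; 12308752; 12308753; 12308754; 12308760; 12308761; 12308762; 12308768; 12308769; 12308770;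 12308772; 12308773; 12308774; 12308776; 12308778; 12308800; 12308801; 12308802; 12308804; 12308805; 12308806; 12308808; 12308809; 12308810; 12308816; 12308817; 12308818; 12308824; 12308826; 12308832; 12308833; 12308834; 12308836; 12308838; 12308842; 12308864; 12308865; 12308866; 12308868; 12308869; 12308872; 12308873; 12308874; 12308880; 12308881; 12308888; 12308889; 12308890; 12308896; 12308897; 12308898; 12308900; 12308901; 12308902; 12308904; 12308905; 12308906; 12312064; 12312065; 12312066; 12312068; 12312069; 12312070; 12312072; 12312073; 12312074; 12312080; 12312081; 12312082; 12312084; 12312085; 12312086; 12312088; 12312089; 12312090; 12312096; 12312097; 12312098; 12312100; 12312101; 12312102; 12312104; 12312106; 12312128; 12312129; 12312130; 12312132; 12312133; 12312134; 12312136; 12312137; 12312138; 12312144].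
Definition X2_8 : seq positive := [:: 12312145; 12312146; 12312148; 12312149; 12312150; 12312152; 12312153; 12312154; 12312160; 12312161; 12312162; 12312164; 12312165; 12312166; 12312170; 12312192; 12312193; 12312194; 12312196; 12312197; 12312198; 12312200; 12312201; 12312202; 12312208; 12312209; 12312210; 12312212; 12312213; 12312216; 12312217; 12312218; 12312224; 12312225; 12312226; 12312228; 12312229; 12312230; 12312232; 12312233; 12312234; 12853504; 12853505; 12853506; 12853508; 12853509; 12853510; 12853512; 12853513; 12853514; 12853520; 12853521; 12853522; 12853524; 12853525; 12853528; 12853529; 12853530; 12853536; 12853537; 12853538; 12853540; 12853541; 12853542; 12853544; 12853545; 12853546; 12853568; 12853569; 12853570; 12853572; 12853573; 12853574; 12853576; 12853577; 12853578; 12853584; 12853585; 12853586; 12853588; 12853589; 12853592; 12853593; 12853594; 12853600; 12853601; 12853602; 12853604; 12853605; 12853606; 12853608; 12853610; 12853632; 12853633; 12853636; 12853637; 12853640; 12853641; 12853642; 12853648; 12853649; 12853656; 12853657; 12853664; 12853665; 12853666; 12853668; 12853669; 12853672; 12853673; 12853674; 12855552; 12855553; 12855554; 12855557; 12855560; 12855561; 12855562; 12855569; 12855577; 12855584; 12855585; 12855586; 12855589; 12855592; 12855593; 12855594; 12855616; 12855617; 12855618; 12855620; 12855621; 12855624; 12855625; 12855626; 12855632; 12855633; 12855640; 12855641; 12855642; 12855648; 12855649; 12855650; 12855652; 12855653; 12855654; 12855656; 12855658; 12855680; 12855681; 12855688; 12855689; 12855705; 12855712; 12855713; 12855717; 12855720;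 12855721; 12855722; 12856832; 12856834; 12856836; 12856840; 12856842; 12856848; 12856852; 12856856; 12856857; 12856858; 12856864; 12856866; 12856868; 12856869; 12856870; 12856872; 12856874; 12856920; 12856932; 12856960; 12856968; 12856984; 12856992; 12856996; 12857000; 12857002; 12857600; 12857601; 12857602; 12857604; 12857605; 12857606; 12857608; 12857609; 12857610; 12857616; 12857617; 12857618; 12857621; 12857624; 12857625; 12857626; 12857632; 12857633; 12857634; 12857636; 12857637; 12857638; 12857640; 12857641; 12857642; 12857664; 12857665; 12857666; 12857668; 12857669; 12857670; 12857672; 12857673; 12857674; 12857680; 12857681; 12857682; 12857684; 12857685; 12857688; 12857689; 12857690; 12857696; 12857697; 12857698; 12857700; 12857701; 12857702; 12857704; 12857705; 12857706; 12857728; 12857729; 12857732; 12857733; 12857736; 12857737; 12857738; 12857744; 12857745; 12857752; 12857753; 12857760; 12857761; 12857762; 12857764; 12857765; 12857768; 12857769; 12857770; 12858904; 12858916; 12859649; 12859657; 12859681; 12859712; 12859713; 12859714; 12859720; 12859721; 12859722; 12859744; 12859745; 12859746; 12859754; 12859777; 12859785; 12859809; 12859817; 12860928; 12860929; 12860930; 12860932; 12860933; 12860934; 12860936; 12860937; 12860938; 12860944; 12860945; 12860946; 12860948; 12860949; 12860952; 12860953; 12860954; 12860960; 12860961; 12860962; 12860964; 12860965; 12860966; 12860968; 12860969; 12860970; 12860992; 12860994; 12860996; 12861000; 12861002; 12861008; 12861012; 12861016; 12861017; 12861018; 12861024; 12861026; 12861028; 12861029; 12861030; 12861032; 12861034;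 12861056; 12861057; 12861060; 12861064; 12861065; 12861066; 12861072; 12861080; 12861081; 12861088; 12861089; 12861090; 12861092; 12861093; 12861096; 12861097; 12861098; 12919040; 12919041; 12919042; 12919044; 12919045; 12919046; 12919050; 12919056; 12919057; 12919058; 12919060; 12919061; 12919062; 12919066; 12919074; 12919078; 12919104; 12919106; 12919108; 12919110; 12919120; 12919122; 12919124; 12919126; 12919168; 12919169; 12919170; 12919172; 12919173; 12919174; 12919176; 12919178; 12919184; 12919185; 12919186; 12919188; 12919189; 12919190; 12919192; 12919194; 12919200; 12919202; 12919204; 12919206; 12921088; 12921089; 12921090; 12921094; 12921098; 12921106; 12921122; 12921152; 12921154; 12921158; 12921170; 12921216; 12921217; 12921218; 12921220; 12921221; 12921222; 12921224; 12921226; 12921232; 12921233; 12921234].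
Definition X2_9 : seq positive := [:: 12921242; 12921248; 12921250; 12921254; 12922372; 12922374; 12922384; 12922386; 12922388; 12922390; 12922500; 12922502; 12922512; 12922514; 12922516; 12922518; 12922522; 12922534; 12923136; 12923137; 12923138; 12923140; 12923141; 12923142; 12923146; 12923152; 12923153; 12923154; 12923158; 12923162; 12923170; 12923174; 12923200; 12923201; 12923202; 12923204; 12923206; 12923210; 12923216; 12923218; 12923222; 12923234; 12923264; 12923265; 12923266; 12923268; 12923269; 12923270; 12923272; 12923273; 12923274; 12923280; 12923281; 12923282; 12923284; 12923285; 12923286; 12923288; 12923290; 12923296; 12923297; 12923298; 12923300; 12923302; 12923306; 12926464; 12926466; 12926468; 12926469; 12926470; 12926474; 12926480; 12926481; 12926482; 12926484; 12926485; 12926486; 12926490; 12926498; 12926502; 12926532; 12926534; 12926544; 12926546; 12926548; 12926550; 12926592; 12926594; 12926596; 12926597; 12926598; 12926600; 12926602; 12926608; 12926609; 12926610; 12926612; 12926613; 12926614; 12926616; 12926618; 12926624; 12926626; 12926628; 12926630; 12960008; 12960009; 12960032; 12960033; 12960040; 12960041; 12960072; 12960096; 12960104; 12960105; 12962089; 12962152; 12962153; 12963368; 12964104; 12964105; 12964128; 12964129; 12964136; 12964137; 12964168; 12964169; 12964192; 12964193; 12964200; 12964201; 12967432; 12967456; 12967464; 12967465; 12967528; 12984576; 12984577; 12984578; 12984580; 12984581; 12984582; 12984584; 12984585; 12984586; 12984592; 12984593; 12984594; 12984596; 12984597; 12984598; 12984600; 12984601; 12984602; 12984608; 12984609; 12984610;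 12984612; 12984613; 12984614; 12984618; 12984640; 12984641; 12984642; 12984644; 12984645; 12984646; 12984648; 12984650; 12984656; 12984657; 12984658; 12984660; 12984661; 12984662; 12984664; 12984666; 12984672; 12984674; 12984676; 12984678; 12984704; 12984705; 12984706; 12984708; 12984709; 12984710; 12984712; 12984713; 12984714; 12984720; 12984721; 12984722; 12984724; 12984725; 12984728; 12984729; 12984730; 12984736; 12984737; 12984738; 12984740; 12984741; 12984742; 12984744; 12984746; 12986624; 12986625; 12986626; 12986628; 12986629; 12986630; 12986632; 12986633; 12986634; 12986640; 12986641; 12986642; 12986650; 12986656; 12986657; 12986658; 12986662; 12986666; 12986688; 12986689; 12986690; 12986692; 12986693; 12986694; 12986696; 12986698; 12986704; 12986705; 12986706; 12986714; 12986720; 12986722; 12986726; 12986752; 12986753; 12986754; 12986756; 12986757; 12986760; 12986761; 12986762; 12986768; 12986769; 12986776; 12986777; 12986778; 12986784; 12986785; 12986786; 12986788; 12986789; 12986790; 12986792; 12986794; 12987904; 12987906; 12987908; 12987910; 12987912; 12987914; 12987920; 12987922; 12987924; 12987925; 12987926; 12987928; 12987930; 12987936; 12987938; 12987940; 12987942; 12987988; 12988032; 12988034; 12988036; 12988040; 12988042; 12988048; 12988052; 12988056; 12988058; 12988064; 12988066; 12988068; 12988070; 12988074; 12988672; 12988673; 12988674; 12988676; 12988677; 12988678; 12988680; 12988681; 12988682; 12988688; 12988689; 12988690; 12988692; 12988693; 12988694; 12988696; 12988697; 12988698; 12988704; 12988705; 12988706; 12988708; 12988709; 12988710; 12988714;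 12988736; 12988737; 12988738; 12988740; 12988741; 12988742; 12988744; 12988745; 12988746; 12988752; 12988753; 12988754; 12988756; 12988757; 12988758; 12988760; 12988762; 12988768; 12988769; 12988770; 12988772; 12988774; 12988778; 12988800; 12988801; 12988802; 12988804; 12988805; 12988806; 12988808; 12988809; 12988810; 12988816; 12988817; 12988818; 12988820; 12988821; 12988824; 12988825; 12988826; 12988832; 12988833; 12988834; 12988836; 12988837; 12988838; 12988840; 12988841; 12988842; 12989972; 12990720; 12990721; 12990722; 12990730; 12990754; 12990784; 12990785; 12990786; 12990794; 12990818; 12990848; 12990849; 12990850; 12990856; 12990857; 12990858; 12990880; 12990881; 12990882; 12990890; 12992000; 12992001; 12992002; 12992004; 12992005; 12992006; 12992008; 12992009; 12992010; 12992016; 12992017; 12992018; 12992020].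
Definition X2_10 : seq positive := [:: 12992021; 12992022; 12992024; 12992025; 12992026; 12992032; 12992033; 12992034; 12992036; 12992037; 12992038; 12992042; 12992064; 12992066; 12992068; 12992070; 12992072; 12992074; 12992080; 12992082; 12992084; 12992085; 12992086; 12992088; 12992090; 12992096; 12992098; 12992100; 12992102; 12992128; 12992129; 12992130; 12992132; 12992133; 12992134; 12992136; 12992137; 12992138; 12992144; 12992145; 12992146; 12992148; 12992149; 12992152; 12992153; 12992154; 12992160; 12992161; 12992162; 12992164; 12992165; 12992166; 12992168; 12992170; 13050114; 13050118; 13050130; 13050134; 13050240; 13050242; 13050244; 13050246; 13050256; 13050258; 13050260; 13050262; 13053590; 13054210; 13054214; 13054226; 13054274; 13054336; 13054337; 13054338; 13054340; 13054342; 13054346; 13054352; 13054354; 13054358; 13054370; 13057538; 13057542; 13057554; 13057558; 13057664; 13057666; 13057668; 13057670; 13057680; 13057682; 13057684; 13057686; 13091072; 13091073; 13091076; 13091077; 13091080; 13091081; 13091082; 13091088; 13091089; 13091096; 13091097; 13091104; 13091105; 13091106; 13091108; 13091109; 13091112; 13091113; 13091114; 13091136; 13091137; 13091140; 13091144; 13091145; 13091146; 13091152; 13091160; 13091161; 13091168; 13091169; 13091170; 13091172; 13091173; 13091176; 13091177; 13091178; 13091208; 13091209; 13091232; 13091233; 13091240; 13091241; 13093120; 13093121; 13093128; 13093129; 13093152; 13093153; 13093160; 13093161; 13093162; 13093184; 13093185; 13093192; 13093193; 13093209; 13093216; 13093217; 13093221; 13093224; 13093225; 13093226; 13093288; 13093289;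 13094400; 13094408; 13094424; 13094432; 13094436; 13094440; 13094441; 13094442; 13094504; 13094568; 13095168; 13095169; 13095172; 13095173; 13095176; 13095177; 13095178; 13095184; 13095185; 13095192; 13095193; 13095200; 13095201; 13095202; 13095204; 13095205; 13095208; 13095209; 13095210; 13095232; 13095233; 13095236; 13095237; 13095240; 13095241; 13095242; 13095248; 13095249; 13095256; 13095257; 13095264; 13095265; 13095266; 13095268; 13095269; 13095272; 13095273; 13095274; 13095304; 13095305; 13095328; 13095329; 13095336; 13095337; 13096488; 13097281; 13097289; 13097313; 13097321; 13098496; 13098497; 13098500; 13098504; 13098505; 13098506; 13098512; 13098520; 13098521; 13098528; 13098529; 13098530; 13098532; 13098533; 13098536; 13098537; 13098538; 13098560; 13098568; 13098584; 13098592; 13098596; 13098600; 13098601; 13098602; 13098632; 13098656; 13098664; 13098665; 13902088; 13902112; 13902120; 13902121; 13902184; 13909544; 13970968; 13970980; 14036520; 14040576; 14040584; 14040600; 14040608; 14040612; 14040616; 14040617; 14040618; 14040680; 14040744; 14164224; 14164225; 14164226; 14164228; 14164229; 14164230; 14164234; 14164240; 14164241; 14164242; 14164246; 14164250; 14164258; 14164262; 14164288; 14164290; 14164292; 14164294; 14164304; 14164306; 14164310; 14164352; 14164353; 14164354; 14164356; 14164357; 14164358; 14164360; 14164362; 14164368; 14164369; 14164370; 14164372; 14164373; 14164374; 14164376; 14164378; 14164384; 14164386; 14164388; 14164390; 14166274; 14166338; 14166400; 14166401; 14166402; 14166410; 14166434; 14167552; 14167554; 14167556; 14167558; 14167568;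 14167570; 14167572; 14167574; 14167622; 14167634; 14167638; 14167680; 14167682; 14167684; 14167685; 14167686; 14167690; 14167696; 14167697; 14167698; 14167700; 14167701; 14167702; 14167706; 14167714; 14167718; 14168320; 14168321; 14168322; 14168326; 14168330; 14168338; 14168354; 14168384; 14168386; 14168390; 14168402; 14168448; 14168449; 14168450; 14168452; 14168453; 14168454; 14168456; 14168458; 14168464; 14168465; 14168466; 14168474; 14168480; 14168482; 14168486; 14171648; 14171649; 14171650; 14171652; 14171653; 14171654; 14171658; 14171664; 14171665; 14171666; 14171668; 14171669; 14171670; 14171674; 14171682; 14171686; 14171712; 14171714; 14171716; 14171718; 14171728; 14171730; 14171732; 14171734; 14171776; 14171777; 14171778; 14171780; 14171781; 14171782; 14171784; 14171786; 14171792; 14171793; 14171794; 14171796].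
Definition X2_11 : seq positive := [:: 14171797; 14171798; 14171800; 14171802; 14171808; 14171810; 14171812; 14171814; 14270720; 14270721; 14270722; 14270724; 14270725; 14270726; 14270728; 14270729; 14270730; 14270736; 14270737; 14270738; 14270741; 14270744; 14270745; 14270746; 14270752; 14270753; 14270754; 14270756; 14270757; 14270758; 14270760; 14270761; 14270762; 14270784; 14270785; 14270786; 14270788; 14270789; 14270790; 14270792; 14270793; 14270794; 14270800; 14270801; 14270802; 14270804; 14270805; 14270808; 14270809; 14270810; 14270816; 14270817; 14270818; 14270820; 14270821; 14270822; 14270824; 14270826; 14270848; 14270849; 14270852; 14270853; 14270856; 14270857; 14270858; 14270864; 14270865; 14270872; 14270873; 14270880; 14270881; 14270882; 14270884; 14270885; 14270888; 14270889; 14270890; 14272769; 14272777; 14272801; 14272832; 14272833; 14272834; 14272840; 14272841; 14272842; 14272864; 14272865; 14272866; 14272874; 14272897; 14272905; 14272929; 14272937; 14274816; 14274817; 14274818; 14274821; 14274824; 14274825; 14274826; 14274833; 14274841; 14274848; 14274849; 14274850; 14274853; 14274856; 14274857; 14274858; 14274880; 14274881; 14274882; 14274884; 14274885; 14274886; 14274888; 14274889; 14274890; 14274896; 14274897; 14274898; 14274904; 14274905; 14274906; 14274912; 14274913; 14274914; 14274916; 14274917; 14274918; 14274920; 14274922; 14274944; 14274945; 14274949; 14274952; 14274953; 14274954; 14274961; 14274969; 14274976; 14274977; 14274978; 14274981; 14274984; 14274985; 14274986; 14295298; 14295302; 14295314; 14295424; 14295426; 14295428; 14295430; 14295440; 14295442;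 14295446; 14297474; 14298754; 14298758; 14298770; 14298774; 14299394; 14299520; 14299522; 14299526; 14299538; 14300822; 14302722; 14302726; 14302738; 14302742; 14302848; 14302850; 14302852; 14302854; 14302864; 14302866; 14302868; 14302870; 14338369; 14338377; 14338401; 14338409; 14340352; 14340353; 14340360; 14340361; 14340362; 14340384; 14340385; 14340386; 14340392; 14340393; 14340394; 14340416; 14340417; 14340421; 14340424; 14340425; 14340426; 14340433; 14340441; 14340448; 14340449; 14340450; 14340453; 14340456; 14340457; 14340458; 14340488; 14340489; 14340512; 14340513; 14340520; 14340521; 14401792; 14401793; 14401794; 14401796; 14401797; 14401798; 14401800; 14401801; 14401802; 14401808; 14401809; 14401810; 14401812; 14401813; 14401814; 14401816; 14401817; 14401818; 14401824; 14401825; 14401826; 14401828; 14401829; 14401830; 14401834; 14401856; 14401857; 14401858; 14401860; 14401861; 14401862; 14401864; 14401866; 14401872; 14401873; 14401874; 14401876; 14401877; 14401878; 14401880; 14401882; 14401888; 14401890; 14401892; 14401894; 14401920; 14401921; 14401922; 14401924; 14401925; 14401926; 14401928; 14401929; 14401930; 14401936; 14401937; 14401938; 14401940; 14401941; 14401944; 14401945; 14401946; 14401952; 14401953; 14401954; 14401956; 14401957; 14401958; 14401960; 14401962; 14403840; 14403841; 14403842; 14403850; 14403874; 14403904; 14403905; 14403906; 14403914; 14403938; 14403968; 14403969; 14403970; 14403976; 14403977; 14403978; 14404000; 14404001; 14404002; 14404010; 14405888; 14405889; 14405890; 14405892; 14405893; 14405894; 14405896; 14405897; 14405898; 14405904;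 14405905; 14405906; 14405914; 14405920; 14405921; 14405922; 14405926; 14405930; 14405952; 14405953; 14405954; 14405956; 14405957; 14405958; 14405960; 14405962; 14405968; 14405969; 14405970; 14405978; 14405984; 14405986; 14405990; 14406016; 14406017; 14406018; 14406020; 14406021; 14406022; 14406024; 14406025; 14406026; 14406032; 14406033; 14406034; 14406040; 14406041; 14406042; 14406048; 14406049; 14406050; 14406052; 14406053; 14406054; 14406056; 14406058; 14409216; 14409217; 14409218; 14409220; 14409221; 14409222; 14409224; 14409225; 14409226; 14409232; 14409233; 14409234; 14409236; 14409237; 14409238; 14409240; 14409241; 14409242; 14409248; 14409249; 14409250; 14409252; 14409253; 14409254; 14409258; 14409280; 14409281; 14409282; 14409284; 14409285; 14409286; 14409288; 14409290; 14409296; 14409297; 14409298; 14409300].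
Definition X2_12 : seq positive := [:: 14409301; 14409302; 14409304; 14409306; 14409312; 14409314; 14409316; 14409318; 14409344; 14409345; 14409346; 14409348; 14409349; 14409350; 14409352; 14409353; 14409354; 14409360; 14409361; 14409362; 14409364; 14409365; 14409366; 14409368; 14409369; 14409370; 14409376; 14409377; 14409378; 14409380; 14409381; 14409382; 14409384; 14409386; 14950656; 14950657; 14950660; 14950661; 14950664; 14950665; 14950666; 14950672; 14950673; 14950680; 14950681; 14950688; 14950689; 14950690; 14950692; 14950693; 14950696; 14950697; 14950698; 14950720; 14950724; 14950728; 14950729; 14950730; 14950736; 14950744; 14950745; 14950752; 14950753; 14950754; 14950756; 14950757; 14950760; 14950761; 14950762; 14950792; 14950793; 14950816; 14950817; 14950824; 14950825; 14952704; 14952705; 14952712; 14952713; 14952729; 14952736; 14952737; 14952741; 14952744; 14952745; 14952746; 14952768; 14952769; 14952776; 14952777; 14952792; 14952793; 14952800; 14952801; 14952804; 14952805; 14952808; 14952809; 14952810; 14952872; 14952873; 14953992; 14954008; 14954016; 14954020; 14954024; 14954026; 14954152; 14954752; 14954753; 14954756; 14954757; 14954760; 14954761; 14954762; 14954768; 14954769; 14954776; 14954777; 14954784; 14954785; 14954786; 14954788; 14954789; 14954792; 14954793; 14954794; 14954816; 14954817; 14954820; 14954821; 14954824; 14954825; 14954826; 14954832; 14954833; 14954840; 14954841; 14954848; 14954849; 14954850; 14954852; 14954853; 14954856; 14954857; 14954858; 14954888; 14954889; 14954912; 14954913; 14954920; 14954921; 14958080; 14958084; 14958088; 14958089; 14958090;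 14958096; 14958104; 14958105; 14958112; 14958113; 14958114; 14958116; 14958117; 14958120; 14958121; 14958122; 14958152; 14958168; 14958176; 14958180; 14958184; 14958186; 14958216; 14958240; 14958248; 14958249; 15016192; 15016193; 15016194; 15016196; 15016197; 15016198; 15016200; 15016201; 15016202; 15016208; 15016209; 15016210; 15016212; 15016213; 15016214; 15016216; 15016217; 15016218; 15016224; 15016225; 15016226; 15016228; 15016229; 15016230; 15016234; 15016256; 15016258; 15016260; 15016261; 15016262; 15016264; 15016266; 15016272; 15016273; 15016274; 15016276; 15016277; 15016278; 15016280; 15016282; 15016288; 15016290; 15016292; 15016294; 15016320; 15016321; 15016322; 15016324; 15016325; 15016326; 15016328; 15016329; 15016330; 15016336; 15016337; 15016338; 15016340; 15016341; 15016344; 15016345; 15016346; 15016352; 15016353; 15016354; 15016356; 15016357; 15016358; 15016360; 15016362; 15019524; 15019526; 15019536; 15019538; 15019540; 15019542; 15019544; 15019546; 15019556; 15019558; 15019652; 15019664; 15019668; 15019672; 15019674; 15019684; 15019686; 15023616; 15023618; 15023620; 15023621; 15023622; 15023624; 15023626; 15023632; 15023633; 15023634; 15023636; 15023637; 15023638; 15023640; 15023641; 15023642; 15023648; 15023650; 15023652; 15023653; 15023654; 15023658; 15023684; 15023686; 15023696; 15023698; 15023700; 15023702; 15023704; 15023706; 15023716; 15023718; 15023744; 15023746; 15023748; 15023749; 15023750; 15023752; 15023754; 15023760; 15023761; 15023762; 15023764; 15023765; 15023768; 15023769; 15023770; 15023776; 15023778; 15023780; 15023781; 15023782; 15023784;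 15023786; 15081728; 15081729; 15081730; 15081732; 15081733; 15081734; 15081736; 15081737; 15081738; 15081744; 15081745; 15081746; 15081748; 15081749; 15081752; 15081753; 15081754; 15081760; 15081761; 15081762; 15081764; 15081765; 15081766; 15081768; 15081769; 15081770; 15081792; 15081793; 15081794; 15081796; 15081797; 15081798; 15081800; 15081801; 15081802; 15081808; 15081809; 15081810; 15081812; 15081813; 15081816; 15081817; 15081818; 15081824; 15081825; 15081826; 15081828; 15081829; 15081830; 15081832; 15081834; 15081856; 15081857; 15081860; 15081861; 15081864; 15081865; 15081866; 15081872; 15081873; 15081880; 15081881; 15081888; 15081889; 15081890; 15081892; 15081893; 15081896; 15081897; 15081898; 15085056; 15085060; 15085064; 15085066; 15085072; 15085076; 15085080; 15085082; 15085088; 15085090; 15085092; 15085094].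
Definition X2_13 : seq positive := [:: 15085096; 15085098; 15085192; 15085208; 15085216; 15085220; 15085224; 15085226; 15085824; 15085825; 15085826; 15085828; 15085829; 15085830; 15085832; 15085833; 15085834; 15085840; 15085841; 15085842; 15085844; 15085845; 15085848; 15085849; 15085850; 15085856; 15085857; 15085858; 15085860; 15085861; 15085862; 15085864; 15085865; 15085866; 15085888; 15085889; 15085890; 15085892; 15085893; 15085894; 15085896; 15085897; 15085898; 15085904; 15085905; 15085906; 15085908; 15085909; 15085912; 15085913; 15085914; 15085920; 15085921; 15085922; 15085924; 15085925; 15085926; 15085928; 15085929; 15085930; 15085952; 15085953; 15085956; 15085957; 15085960; 15085961; 15085962; 15085968; 15085969; 15085976; 15085977; 15085984; 15085985; 15085986; 15085988; 15085989; 15085992; 15085993; 15085994; 15089152; 15089153; 15089154; 15089156; 15089157; 15089158; 15089160; 15089161; 15089162; 15089168; 15089169; 15089170; 15089172; 15089173; 15089176; 15089177; 15089178; 15089184; 15089185; 15089186; 15089188; 15089189; 15089190; 15089192; 15089193; 15089194; 15089216; 15089220; 15089224; 15089226; 15089232; 15089236; 15089240; 15089242; 15089248; 15089250; 15089252; 15089254; 15089256; 15089258; 15089280; 15089284; 15089288; 15089289; 15089290; 15089296; 15089304; 15089305; 15089312; 15089313; 15089314; 15089316; 15089317; 15089320; 15089321; 15089322; 15150612; 15150614; 15150740; 15150742; 15154688; 15154690; 15154692; 15154694; 15154698; 15154704; 15154706; 15154708; 15154709; 15154710; 15154714; 15154722; 15154726; 15154772; 15154774; 15154816; 15154818; 15154820;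 15154822; 15154824; 15154826; 15154832; 15154834; 15154836; 15154837; 15154838; 15154840; 15154842; 15154848; 15154850; 15154852; 15154854; 15188232; 15188233; 15188256; 15188257; 15188264; 15188265; 15188296; 15188320; 15188328; 15188329; 15190312; 15190313; 15190376; 15190377; 15191592; 15192328; 15192329; 15192352; 15192353; 15192360; 15192361; 15192392; 15192393; 15192416; 15192417; 15192424; 15192425; 15194473; 15195656; 15195680; 15195688; 15195689; 15195752; 15212802; 15212928; 15212930; 15212934; 15212946; 15217026; 15321410; 15321473; 15452546; 15454464; 15454466; 15454530; 15454592; 15454593; 15454594; 15454598; 15454602; 15454610; 15454626; 16261376; 16261377; 16261378; 16261380; 16261381; 16261382; 16261384; 16261385; 16261386; 16261392; 16261393; 16261394; 16261396; 16261397; 16261398; 16261400; 16261401; 16261402; 16261408; 16261409; 16261410; 16261412; 16261413; 16261414; 16261418; 16261440; 16261441; 16261442; 16261444; 16261445; 16261446; 16261448; 16261450; 16261456; 16261457; 16261458; 16261460; 16261461; 16261462; 16261464; 16261466; 16261472; 16261474; 16261476; 16261478; 16261504; 16261505; 16261506; 16261508; 16261509; 16261510; 16261512; 16261513; 16261514; 16261520; 16261521; 16261522; 16261524; 16261525; 16261528; 16261529; 16261530; 16261536; 16261537; 16261538; 16261540; 16261541; 16261542; 16261544; 16261546; 16263424; 16263425; 16263426; 16263432; 16263434; 16263456; 16263458; 16263488; 16263489; 16263490; 16263494; 16263498; 16263506; 16263522; 16263552; 16263553; 16263554; 16263557; 16263560; 16263561; 16263562; 16263569; 16263584; 16263585;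 16263586; 16263594; 16264704; 16264706; 16264708; 16264709; 16264710; 16264712; 16264714; 16264720; 16264721; 16264722; 16264724; 16264725; 16264726; 16264728; 16264730; 16264736; 16264738; 16264740; 16264742; 16264772; 16264774; 16264784; 16264786; 16264788; 16264790; 16264794; 16264806; 16264832; 16264834; 16264836; 16264837; 16264838; 16264840; 16264842; 16264848; 16264849; 16264850; 16264852; 16264853; 16264856; 16264857; 16264858; 16264864; 16264866; 16264868; 16264869; 16264870; 16264874; 16265472; 16265473; 16265474; 16265476; 16265477; 16265478; 16265480; 16265481; 16265482; 16265488; 16265489; 16265490; 16265496; 16265498; 16265504; 16265505; 16265506; 16265508; 16265510; 16265514; 16265536; 16265537; 16265538; 16265540; 16265541; 16265542; 16265544; 16265546; 16265552; 16265553; 16265554; 16265558; 16265562].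
Definition X2_14 : seq positive := [:: 16265568; 16265570; 16265574; 16265600; 16265601; 16265602; 16265604; 16265605; 16265606; 16265608; 16265609; 16265610; 16265616; 16265617; 16265618; 16265621; 16265624; 16265625; 16265626; 16265632; 16265633; 16265634; 16265636; 16265637; 16265638; 16265640; 16265642; 16266756; 16266758; 16266768; 16266770; 16266772; 16266774; 16266776; 16266778; 16266788; 16266790; 16266884; 16266896; 16266900; 16266904; 16266906; 16266916; 16266918; 16267586; 16267649; 16268800; 16268801; 16268802; 16268804; 16268805; 16268806; 16268808; 16268809; 16268810; 16268816; 16268817; 16268818; 16268820; 16268821; 16268822; 16268824; 16268825; 16268826; 16268832; 16268833; 16268834; 16268836; 16268837; 16268838; 16268842; 16268864; 16268866; 16268868; 16268869; 16268870; 16268872; 16268874; 16268880; 16268881; 16268882; 16268884; 16268885; 16268886; 16268888; 16268890; 16268896; 16268898; 16268900; 16268902; 16268928; 16268929; 16268930; 16268932; 16268933; 16268934; 16268936; 16268937; 16268938; 16268944; 16268945; 16268946; 16268948; 16268949; 16268950; 16268952; 16268953; 16268954; 16268960; 16268961; 16268962; 16268964; 16268965; 16268966; 16268968; 16268970; 16326914; 16326918; 16326930; 16327040; 16327042; 16327044; 16327046; 16327056; 16327058; 16327062; 16329090; 16330374; 16330386; 16330390; 16331010; 16331136; 16331138; 16331142; 16331154; 16334338; 16334342; 16334354; 16334358; 16334464; 16334466; 16334468; 16334470; 16334480; 16334482; 16334484; 16334486; 16367872; 16367873; 16367876; 16367877; 16367880; 16367881; 16367882; 16367888; 16367889; 16367896;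 16367897; 16367904; 16367905; 16367906; 16367908; 16367909; 16367912; 16367913; 16367914; 16367936; 16367937; 16367940; 16367941; 16367944; 16367945; 16367946; 16367952; 16367953; 16367960; 16367961; 16367968; 16367969; 16367970; 16367972; 16367973; 16367976; 16367977; 16367978; 16368008; 16368009; 16368032; 16368033; 16368040; 16368041; 16369921; 16369929; 16369953; 16369961; 16369984; 16369985; 16369992; 16369993; 16370016; 16370017; 16370024; 16370025; 16370026; 16370089; 16371200; 16371204; 16371208; 16371209; 16371210; 16371216; 16371224; 16371225; 16371232; 16371233; 16371234; 16371236; 16371237; 16371240; 16371241; 16371242; 16371272; 16371288; 16371296; 16371300; 16371304; 16371306; 16371336; 16371360; 16371368; 16371369; 16371968; 16371969; 16371973; 16371976; 16371977; 16371978; 16371985; 16371993; 16372000; 16372001; 16372002; 16372005; 16372008; 16372009; 16372010; 16372032; 16372033; 16372036; 16372037; 16372040; 16372041; 16372042; 16372048; 16372049; 16372056; 16372057; 16372064; 16372065; 16372066; 16372068; 16372069; 16372072; 16372073; 16372074; 16372104; 16372105; 16372128; 16372129; 16372136; 16372137; 16375296; 16375297; 16375300; 16375301; 16375304; 16375305; 16375306; 16375312; 16375313; 16375316; 16375320; 16375321; 16375322; 16375328; 16375329; 16375330; 16375332; 16375333; 16375334; 16375336; 16375337; 16375338; 16375360; 16375364; 16375368; 16375369; 16375370; 16375376; 16375384; 16375385; 16375392; 16375393; 16375394; 16375396; 16375397; 16375400; 16375401; 16375402; 16375432; 16375433; 16375448; 16375456; 16375457; 16375460; 16375464; 16375465;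 16375466; 16392448; 16392449; 16392450; 16392452; 16392453; 16392454; 16392458; 16392464; 16392465; 16392466; 16392468; 16392470; 16392474; 16392482; 16392486; 16392512; 16392514; 16392516; 16392518; 16392528; 16392530; 16392534; 16392576; 16392577; 16392578; 16392580; 16392581; 16392582; 16392584; 16392586; 16392592; 16392593; 16392594; 16392596; 16392597; 16392598; 16392600; 16392602; 16392608; 16392610; 16392612; 16392614; 16394496; 16394498; 16394562; 16394624; 16394625; 16394626; 16394630; 16394634; 16394642; 16394658; 16395776; 16395778; 16395780; 16395782; 16395792; 16395794; 16395796; 16395798; 16395862; 16395904; 16395906; 16395908; 16395910; 16395914; 16395920; 16395922; 16395924; 16395925; 16395926; 16395930; 16395938; 16395942; 16396544; 16396545; 16396546; 16396548; 16396550; 16396554; 16396560; 16396562].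
Definition X2_15 : seq positive := [:: 16396578; 16396608; 16396610; 16396614; 16396626; 16396672; 16396673; 16396674; 16396676; 16396677; 16396678; 16396680; 16396682; 16396688; 16396689; 16396690; 16396694; 16396698; 16396704; 16396706; 16396710; 16397844; 16397846; 16397972; 16397974; 16398722; 16399872; 16399873; 16399874; 16399876; 16399877; 16399878; 16399882; 16399888; 16399889; 16399890; 16399892; 16399893; 16399894; 16399898; 16399906; 16399910; 16399936; 16399938; 16399940; 16399942; 16399952; 16399954; 16399956; 16399958; 16400000; 16400001; 16400002; 16400004; 16400005; 16400006; 16400008; 16400010; 16400016; 16400017; 16400018; 16400020; 16400021; 16400022; 16400024; 16400026; 16400032; 16400034; 16400036; 16400038; 16433416; 16433417; 16433440; 16433441; 16433448; 16433449; 16433480; 16433481; 16433504; 16433505; 16433512; 16433513; 16435561; 16437512; 16437513; 16437536; 16437537; 16437544; 16437545; 16437576; 16437577; 16437600; 16437601; 16437608; 16437609; 16440840; 16440841; 16440856; 16440864; 16440865; 16440868; 16440872; 16440873; 16440874; 16440904; 16440928; 16440936; 16440937; 16441000; 16498944; 16498945; 16498946; 16498948; 16498949; 16498950; 16498952; 16498953; 16498954; 16498960; 16498961; 16498962; 16498964; 16498965; 16498968; 16498969; 16498970; 16498976; 16498977; 16498978; 16498980; 16498981; 16498982; 16498984; 16498985; 16498986; 16499008; 16499009; 16499010; 16499012; 16499013; 16499014; 16499016; 16499017; 16499018; 16499024; 16499025; 16499026; 16499028; 16499029; 16499032; 16499033; 16499034; 16499040; 16499041; 16499042; 16499044; 16499045;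 16499046; 16499048; 16499050; 16499072; 16499073; 16499076; 16499077; 16499080; 16499081; 16499082; 16499088; 16499089; 16499096; 16499097; 16499104; 16499105; 16499106; 16499108; 16499109; 16499112; 16499113; 16499114; 16500992; 16500993; 16500994; 16501000; 16501001; 16501002; 16501024; 16501025; 16501026; 16501032; 16501034; 16501056; 16501057; 16501058; 16501061; 16501064; 16501065; 16501066; 16501073; 16501088; 16501089; 16501090; 16501098; 16501120; 16501121; 16501128; 16501129; 16501152; 16501153; 16501160; 16501161; 16501162; 16502272; 16502273; 16502274; 16502276; 16502277; 16502278; 16502280; 16502281; 16502282; 16502288; 16502289; 16502290; 16502292; 16502293; 16502296; 16502297; 16502298; 16502304; 16502305; 16502306; 16502308; 16502309; 16502310; 16502312; 16502314; 16502336; 16502340; 16502344; 16502346; 16502352; 16502356; 16502360; 16502362; 16502368; 16502370; 16502372; 16502374; 16502378; 16502400; 16502404; 16502408; 16502409; 16502410; 16502416; 16502424; 16502425; 16502432; 16502433; 16502434; 16502436; 16502437; 16502440; 16502441; 16502442; 16503040; 16503041; 16503042; 16503044; 16503045; 16503046; 16503048; 16503049; 16503050; 16503056; 16503057; 16503058; 16503064; 16503065; 16503066; 16503072; 16503073; 16503074; 16503076; 16503077; 16503078; 16503080; 16503081; 16503082; 16503104; 16503105; 16503106; 16503108; 16503109; 16503110; 16503112; 16503113; 16503114; 16503120; 16503121; 16503122; 16503125; 16503128; 16503129; 16503130; 16503136; 16503137; 16503138; 16503140; 16503141; 16503142; 16503144; 16503146; 16503168; 16503169; 16503172; 16503173;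 16503176; 16503177; 16503178; 16503184; 16503185; 16503192; 16503193; 16503200; 16503201; 16503202; 16503204; 16503205; 16503208; 16503209; 16503210; 16504320; 16504324; 16504328; 16504330; 16504336; 16504340; 16504344; 16504346; 16504352; 16504354; 16504356; 16504358; 16504360; 16504362; 16504456; 16504472; 16504480; 16504484; 16504488; 16504490; 16505153; 16506368; 16506369; 16506370; 16506372; 16506373; 16506374; 16506376; 16506377; 16506378; 16506384; 16506385; 16506386; 16506388; 16506389; 16506390; 16506392; 16506393; 16506394; 16506400; 16506401; 16506402; 16506404; 16506405; 16506406; 16506408; 16506409; 16506410; 16506432; 16506433; 16506434; 16506436; 16506437; 16506438; 16506440; 16506441; 16506442; 16506448; 16506449; 16506450; 16506452; 16506453; 16506456; 16506457; 16506458; 16506464; 16506465; 16506466].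
Definition X2_16 : seq positive := [:: 16506468; 16506469; 16506470; 16506472; 16506474; 16506496; 16506497; 16506500; 16506501; 16506504; 16506505; 16506506; 16506512; 16506513; 16506516; 16506520; 16506521; 16506522; 16506528; 16506529; 16506530; 16506532; 16506533; 16506534; 16506536; 16506537; 16506538].
Definition Xl2 : seq positive := X2_0 ++ X2_1 ++ X2_2 ++ X2_3 ++ X2_4 ++ X2_5 ++ X2_6 ++ X2_7 ++ X2_8 ++ X2_9 ++ X2_10 ++ X2_11 ++ X2_12 ++ X2_13 ++ X2_14 ++ X2_15 ++ X2_16.
Definition X3_0 : seq positive := [:: 8659200; 8659201; 8659202; 8659204; 8659205; 8659206; 8659208; 8659209; 8659210; 8659216; 8659217; 8659218; 8659220; 8659221; 8659224; 8659225; 8659226; 8659232; 8659233; 8659234; 8659236; 8659237; 8659238; 8659240; 8659242; 8659264; 8659265; 8659266; 8659268; 8659269; 8659270; 8659272; 8659274; 8659280; 8659281; 8659282; 8659284; 8659285; 8659288; 8659290; 8659296; 8659298; 8659300; 8659302; 8659328; 8659329; 8659330; 8659332; 8659333; 8659336; 8659337; 8659338; 8659344; 8659345; 8659352; 8659353; 8659360; 8659361; 8659362; 8659364; 8659365; 8659368; 8659370; 8661248; 8661249; 8661250; 8661256; 8661257; 8661258; 8661280; 8661281; 8661282; 8661290; 8661312; 8661313; 8661314; 8661320; 8661322; 8661344; 8661346; 8661376; 8661377; 8661384; 8661385; 8661386; 8661408; 8661409; 8661410; 8661416; 8661418; 8662528; 8662530; 8662532; 8662534; 8662536; 8662538; 8662544;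 8662546; 8662548; 8662552; 8662554; 8662560; 8662562; 8662564; 8662566; 8662570; 8662656; 8662660; 8662664; 8662666; 8662672; 8662680; 8662688; 8662690; 8662692; 8662696; 8662698; 8663296; 8663297; 8663298; 8663300; 8663301; 8663302; 8663304; 8663305; 8663306; 8663312; 8663313; 8663314; 8663320; 8663321; 8663322; 8663328; 8663329; 8663330; 8663332; 8663333; 8663334; 8663336; 8663338; 8663360; 8663361; 8663362; 8663364; 8663365; 8663366; 8663368; 8663370; 8663376; 8663377; 8663378; 8663384; 8663386; 8663392; 8663394; 8663396; 8663398; 8663424; 8663425; 8663426; 8663428; 8663429; 8663432; 8663433; 8663434; 8663440; 8663441; 8663448; 8663449; 8663456; 8663457; 8663458; 8663460; 8663461; 8663464; 8663466; 8666624; 8666625; 8666626; 8666628; 8666629; 8666630; 8666632; 8666633; 8666634; 8666640; 8666641; 8666642; 8666644; 8666645; 8666648; 8666649; 8666650; 8666656; 8666657; 8666658; 8666660; 8666661; 8666662; 8666664; 8666666; 8666688; 8666690; 8666692; 8666694; 8666696; 8666698; 8666704; 8666706; 8666708; 8666712; 8666714; 8666720; 8666722; 8666724; 8666726; 8666752; 8666753; 8666754; 8666756; 8666757; 8666760; 8666761; 8666762; 8666768; 8666769; 8666776; 8666777; 8666784; 8666785; 8666786; 8666788; 8666789; 8666792; 8666794; 8724736; 8724738; 8724740; 8724742; 8724752; 8724754; 8724758; 8724864; 8724866; 8724868; 8724870; 8724880; 8724882; 8724884; 8724886; 8726786; 8726912; 8726914; 8728070; 8728082; 8728086; 8728196;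 8728198; 8728208; 8728210; 8728212; 8728214; 8728832; 8728834; 8728838; 8728850; 8728960; 8728962; 8728964; 8728966; 8728976; 8728978; 8732160; 8732162; 8732164; 8732166; 8732176; 8732178; 8732180; 8732182; 8732288; 8732290; 8732292; 8732294; 8732304; 8732306; 8732308; 8732310; 8765696; 8765697; 8765704; 8765705; 8765728; 8765729; 8765736; 8765737; 8765760; 8765768; 8765769; 8765792; 8765793; 8765800; 8765801; 8767753; 8767777; 8767785; 8767816; 8767817; 8767840; 8767841; 8767848; 8767849; 8769032; 8769056; 8769064; 8769792; 8769793; 8769800; 8769801; 8769824; 8769825; 8769832; 8769833; 8769856; 8769857; 8769864; 8769865; 8769888; 8769889; 8769896; 8769897; 8773120; 8773128; 8773129; 8773152; 8773153; 8773160; 8773161; 8773192; 8773216; 8773224; 8790272; 8790273; 8790274; 8790276; 8790277; 8790278; 8790280; 8790282; 8790288; 8790289; 8790290; 8790292; 8790293; 8790294; 8790296; 8790298; 8790304; 8790306; 8790308; 8790310; 8790336; 8790338; 8790340; 8790342; 8790352; 8790354; 8790356; 8790358; 8790400; 8790401; 8790402; 8790404; 8790405; 8790406; 8790408; 8790410; 8790416; 8790417; 8790418; 8790420; 8790421; 8790424; 8790426; 8790432; 8790434; 8790436; 8790438; 8792320; 8792321; 8792322; 8792330; 8792354; 8792384; 8792386; 8792448; 8792449; 8792450; 8792456; 8792458].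
Definition X3_1 : seq positive := [:: 8792480; 8792482; 8793600; 8793602; 8793604; 8793606; 8793610; 8793616; 8793618; 8793620; 8793622; 8793626; 8793634; 8793638; 8793728; 8793730; 8793732; 8793734; 8793736; 8793738; 8793744; 8793746; 8793748; 8793752; 8793754; 8793760; 8793762; 8793764; 8793766; 8794368; 8794369; 8794370; 8794372; 8794373; 8794374; 8794376; 8794378; 8794384; 8794385; 8794386; 8794394; 8794400; 8794402; 8794406; 8794432; 8794434; 8794436; 8794438; 8794448; 8794450; 8794496; 8794497; 8794498; 8794500; 8794501; 8794502; 8794504; 8794506; 8794512; 8794513; 8794514; 8794520; 8794522; 8794528; 8794530; 8794532; 8794534; 8797696; 8797697; 8797698; 8797700; 8797701; 8797702; 8797704; 8797706; 8797712; 8797713; 8797714; 8797716; 8797717; 8797718; 8797720; 8797722; 8797728; 8797730; 8797732; 8797734; 8797760; 8797762; 8797764; 8797766; 8797776; 8797778; 8797780; 8797782; 8797824; 8797825; 8797826; 8797828; 8797829; 8797830; 8797832; 8797834; 8797840; 8797841; 8797842; 8797844; 8797845; 8797848; 8797850; 8797856; 8797858; 8797860; 8797862; 8896768; 8896769; 8896770; 8896772; 8896773; 8896776; 8896777; 8896778; 8896784; 8896785; 8896792; 8896793; 8896800; 8896801; 8896802; 8896804; 8896805; 8896808; 8896809; 8896810; 8896832; 8896833; 8896834; 8896836; 8896837; 8896840; 8896841; 8896842; 8896848; 8896849; 8896856; 8896857; 8896864; 8896865; 8896866; 8896868; 8896869; 8896872; 8896874; 8896896; 8896897; 8896904; 8896905;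 8896928; 8896929; 8896936; 8896937; 8898816; 8898817; 8898824; 8898825; 8898826; 8898848; 8898849; 8898850; 8898856; 8898857; 8898858; 8898880; 8898881; 8898888; 8898889; 8898890; 8898912; 8898913; 8898914; 8898920; 8898922; 8898952; 8898953; 8898976; 8898977; 8898984; 8898985; 8900096; 8900100; 8900104; 8900106; 8900112; 8900120; 8900128; 8900130; 8900132; 8900136; 8900138; 8900232; 8900256; 8900264; 8900864; 8900865; 8900866; 8900868; 8900869; 8900872; 8900873; 8900874; 8900880; 8900881; 8900888; 8900889; 8900896; 8900897; 8900898; 8900900; 8900901; 8900904; 8900905; 8900906; 8900928; 8900929; 8900930; 8900932; 8900933; 8900936; 8900937; 8900938; 8900944; 8900945; 8900952; 8900953; 8900960; 8900961; 8900962; 8900964; 8900965; 8900968; 8900970; 8900992; 8900993; 8901000; 8901001; 8901024; 8901025; 8901032; 8901033; 8904192; 8904193; 8904194; 8904196; 8904197; 8904200; 8904201; 8904202; 8904208; 8904209; 8904216; 8904217; 8904224; 8904225; 8904226; 8904228; 8904229; 8904232; 8904233; 8904234; 8904256; 8904260; 8904264; 8904266; 8904272; 8904280; 8904288; 8904290; 8904292; 8904296; 8904298; 8904320; 8904328; 8904329; 8904352; 8904353; 8904360; 8904361; 9054464; 9054466; 9054592; 9054594; 9424384; 9424392; 9424416; 9424424; 9707776; 9707777; 9707778; 9707780; 9707781; 9707784; 9707785; 9707786; 9707792; 9707793; 9707800; 9707801; 9707808; 9707809; 9707810; 9707812; 9707813; 9707816; 9707817; 9707818; 9707840; 9707841;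 9707842; 9707844; 9707845; 9707848; 9707849; 9707850; 9707856; 9707857; 9707864; 9707865; 9707872; 9707873; 9707874; 9707876; 9707877; 9707880; 9707881; 9707882; 9707904; 9707905; 9707912; 9707913; 9707936; 9707937; 9707944; 9707945; 9711104; 9711106; 9711108; 9711112; 9711114; 9711120; 9711128; 9711136; 9711138; 9711140; 9711144; 9711146; 9711232; 9711240; 9711264; 9711272; 9711872; 9711873; 9711874; 9711876; 9711877; 9711880; 9711881; 9711882; 9711888; 9711889; 9711896; 9711897; 9711904; 9711905; 9711906; 9711908; 9711909; 9711912; 9711913; 9711914; 9711936; 9711937; 9711938; 9711940; 9711941; 9711944; 9711945; 9711946; 9711952; 9711953; 9711960; 9711961; 9711968; 9711969; 9711970; 9711972; 9711973; 9711976; 9711977; 9711978; 9712000].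
Definition X3_2 : seq positive := [:: 9712001; 9712008; 9712009; 9712032; 9712033; 9712040; 9712041; 9715200; 9715201; 9715202; 9715204; 9715205; 9715208; 9715209; 9715210; 9715216; 9715217; 9715224; 9715225; 9715232; 9715233; 9715234; 9715236; 9715237; 9715240; 9715241; 9715242; 9715264; 9715266; 9715268; 9715272; 9715274; 9715280; 9715288; 9715296; 9715298; 9715300; 9715304; 9715306; 9715328; 9715329; 9715336; 9715337; 9715360; 9715361; 9715368; 9715369; 9776644; 9776646; 9776656; 9776658; 9776660; 9776662; 9776664; 9776666; 9776676; 9776678; 9776772; 9776774; 9776784; 9776786; 9776788; 9776792; 9776794; 9776804; 9776806; 9780736; 9780738; 9780740; 9780741; 9780742; 9780744; 9780746; 9780752; 9780753; 9780754; 9780756; 9780757; 9780758; 9780760; 9780762; 9780768; 9780770; 9780772; 9780774; 9780804; 9780806; 9780816; 9780818; 9780820; 9780822; 9780826; 9780838; 9780864; 9780866; 9780868; 9780869; 9780870; 9780872; 9780874; 9780880; 9780881; 9780882; 9780884; 9780885; 9780888; 9780889; 9780890; 9780896; 9780898; 9780900; 9780901; 9780902; 9780906; 9838848; 9838849; 9838850; 9838852; 9838853; 9838854; 9838856; 9838857; 9838858; 9838864; 9838865; 9838866; 9838868; 9838869; 9838872; 9838873; 9838874; 9838880; 9838881; 9838882; 9838884; 9838885; 9838886; 9838888; 9838890; 9838912; 9838913; 9838914; 9838916; 9838917; 9838918; 9838920; 9838921; 9838922; 9838928; 9838929; 9838930; 9838932; 9838933; 9838936; 9838937; 9838938; 9838944;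 9838945; 9838946; 9838948; 9838949; 9838950; 9838954; 9838976; 9838977; 9838978; 9838980; 9838981; 9838984; 9838985; 9838986; 9838992; 9838993; 9839000; 9839001; 9839008; 9839009; 9839010; 9839012; 9839013; 9839016; 9839017; 9839018; 9842176; 9842178; 9842180; 9842182; 9842184; 9842186; 9842192; 9842194; 9842196; 9842200; 9842202; 9842208; 9842210; 9842212; 9842214; 9842216; 9842218; 9842304; 9842306; 9842308; 9842312; 9842314; 9842320; 9842328; 9842336; 9842338; 9842340; 9842344; 9842346; 9846272; 9846273; 9846274; 9846276; 9846277; 9846278; 9846280; 9846281; 9846282; 9846288; 9846289; 9846290; 9846292; 9846293; 9846296; 9846297; 9846298; 9846304; 9846305; 9846306; 9846308; 9846309; 9846310; 9846312; 9846314; 9846336; 9846338; 9846340; 9846342; 9846344; 9846346; 9846352; 9846354; 9846356; 9846360; 9846362; 9846368; 9846370; 9846372; 9846374; 9846378; 9846400; 9846401; 9846402; 9846404; 9846405; 9846408; 9846409; 9846410; 9846416; 9846417; 9846424; 9846425; 9846432; 9846433; 9846434; 9846436; 9846437; 9846440; 9846441; 9846442; 9907732; 9907734; 9907860; 9907862; 9945344; 9945345; 9945352; 9945353; 9945376; 9945377; 9945384; 9945385; 9945408; 9945409; 9945416; 9945417; 9945440; 9945441; 9945448; 9945449; 9947392; 9947393; 9947400; 9947401; 9947424; 9947425; 9947432; 9947433; 9947456; 9947457; 9947464; 9947465; 9947488; 9947489; 9947496; 9947497; 9948672; 9948680; 9948704; 9948712; 9949440; 9949441; 9949448; 9949449;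 9949472; 9949473; 9949480; 9949481; 9949504; 9949505; 9949512; 9949513; 9949536; 9949537; 9949544; 9949545; 9952768; 9952769; 9952776; 9952777; 9952800; 9952801; 9952808; 9952809; 9952832; 9952840; 9952864; 9952872; 9969920; 9969921; 9969922; 9969924; 9969925; 9969926; 9969928; 9969930; 9969936; 9969937; 9969938; 9969940; 9969941; 9969942; 9969944; 9969946; 9969952; 9969954; 9969956; 9969958; 9969984; 9969986; 9969988; 9969990; 9970000; 9970002; 9970004; 9970006; 9970048; 9970049; 9970050; 9970052; 9970053; 9970054; 9970056; 9970058; 9970064; 9970065; 9970066; 9970068; 9970069; 9970070; 9970072; 9970074; 9970080; 9970082; 9970084; 9970086; 9971968; 9971969; 9971970; 9971976; 9971978; 9972000; 9972002; 9972032; 9972034; 9972096; 9972097].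
Definition X3_3 : seq positive := [:: 9972098; 9972104; 9972106; 9972128; 9972130; 9974016; 9974017; 9974018; 9974020; 9974021; 9974022; 9974024; 9974026; 9974032; 9974033; 9974034; 9974040; 9974042; 9974048; 9974050; 9974052; 9974054; 9974080; 9974082; 9974084; 9974086; 9974096; 9974098; 9974144; 9974145; 9974146; 9974148; 9974149; 9974150; 9974152; 9974154; 9974160; 9974161; 9974162; 9974168; 9974170; 9974176; 9974178; 9974180; 9974182; 9977344; 9977345; 9977346; 9977348; 9977349; 9977350; 9977352; 9977354; 9977360; 9977361; 9977362; 9977364; 9977365; 9977366; 9977368; 9977370; 9977376; 9977378; 9977380; 9977382; 9977408; 9977410; 9977412; 9977414; 9977424; 9977426; 9977428; 9977430; 9977472; 9977473; 9977474; 9977476; 9977477; 9977478; 9977480; 9977482; 9977488; 9977489; 9977490; 9977492; 9977493; 9977494; 9977496; 9977498; 9977504; 9977506; 9977508; 9977510; 10078465; 10078473; 10078497; 10078505; 10078528; 10078529; 10078530; 10078536; 10078537; 10078538; 10078560; 10078561; 10078562; 10078568; 10078570; 10078593; 10078601; 10078625; 10078633; 10080512; 10080513; 10080514; 10080517; 10080520; 10080521; 10080522; 10080529; 10080537; 10080544; 10080545; 10080546; 10080549; 10080552; 10080553; 10080554; 10080576; 10080577; 10080578; 10080580; 10080581; 10080584; 10080585; 10080586; 10080592; 10080593; 10080600; 10080601; 10080602; 10080608; 10080609; 10080610; 10080612; 10080613; 10080614; 10080616; 10080618; 10080640; 10080641; 10080648; 10080649; 10080665; 10080672; 10080673; 10080677;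 10080680; 10080681; 10080682; 10100992; 10100994; 10100996; 10100998; 10101008; 10101010; 10101012; 10101014; 10101120; 10101122; 10101124; 10101126; 10101136; 10101138; 10101140; 10101142; 10103040; 10103042; 10103168; 10103170; 10104320; 10104322; 10104324; 10104326; 10104336; 10104338; 10104340; 10104342; 10104448; 10104450; 10104452; 10104454; 10104464; 10104466; 10104468; 10104470; 10105088; 10105090; 10105092; 10105094; 10105104; 10105106; 10105216; 10105218; 10105220; 10105222; 10105232; 10105234; 10108416; 10108418; 10108420; 10108422; 10108432; 10108434; 10108436; 10108438; 10108544; 10108546; 10108548; 10108550; 10108560; 10108562; 10108564; 10108566; 10144065; 10144073; 10144097; 10144105; 10207488; 10207489; 10207490; 10207492; 10207493; 10207494; 10207496; 10207497; 10207498; 10207504; 10207505; 10207506; 10207508; 10207509; 10207510; 10207512; 10207513; 10207514; 10207520; 10207521; 10207522; 10207524; 10207525; 10207526; 10207528; 10207530; 10207552; 10207553; 10207554; 10207556; 10207557; 10207558; 10207560; 10207562; 10207568; 10207569; 10207570; 10207572; 10207573; 10207574; 10207576; 10207578; 10207584; 10207586; 10207588; 10207590; 10207616; 10207617; 10207618; 10207620; 10207621; 10207624; 10207625; 10207626; 10207632; 10207633; 10207636; 10207637; 10207640; 10207641; 10207642; 10207648; 10207649; 10207650; 10207652; 10207653; 10207654; 10207656; 10207658; 10209536; 10209537; 10209538; 10209544; 10209545; 10209546; 10209568; 10209569; 10209570; 10209576; 10209578; 10209600; 10209601; 10209602; 10209608; 10209610; 10209632; 10209634; 10209664; 10209665;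 10209666; 10209672; 10209673; 10209674; 10209696; 10209697; 10209698; 10209704; 10209706; 10211584; 10211585; 10211586; 10211588; 10211589; 10211590; 10211592; 10211593; 10211594; 10211600; 10211601; 10211602; 10211608; 10211609; 10211610; 10211616; 10211617; 10211618; 10211620; 10211621; 10211622; 10211624; 10211626; 10211648; 10211649; 10211650; 10211652; 10211653; 10211654; 10211656; 10211658; 10211664; 10211665; 10211666; 10211672; 10211674; 10211680; 10211682; 10211684; 10211686; 10211712; 10211713; 10211714; 10211716; 10211717; 10211720; 10211721; 10211722; 10211728; 10211729; 10211736; 10211737; 10211738; 10211744; 10211745; 10211746; 10211748; 10211749; 10211750; 10211752; 10211754; 10756352; 10756353; 10756354; 10756356; 10756357; 10756360; 10756361; 10756362; 10756368; 10756369; 10756372; 10756373; 10756376].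
Definition X3_4 : seq positive := [:: 10756377; 10756378; 10756384; 10756385; 10756386; 10756388; 10756389; 10756390; 10756392; 10756393; 10756394; 10756416; 10756417; 10756418; 10756420; 10756421; 10756424; 10756425; 10756426; 10756432; 10756433; 10756436; 10756440; 10756441; 10756442; 10756448; 10756449; 10756450; 10756452; 10756453; 10756454; 10756456; 10756458; 10756480; 10756481; 10756488; 10756489; 10756504; 10756505; 10756512; 10756513; 10756516; 10756517; 10756520; 10756521; 10756522; 10758400; 10758401; 10758402; 10758408; 10758409; 10758410; 10758432; 10758433; 10758434; 10758440; 10758441; 10758442; 10758464; 10758465; 10758466; 10758469; 10758472; 10758473; 10758474; 10758481; 10758496; 10758497; 10758498; 10758504; 10758506; 10758528; 10758529; 10758536; 10758537; 10758560; 10758561; 10758568; 10758569; 10759680; 10759682; 10759684; 10759688; 10759690; 10759696; 10759704; 10759712; 10759714; 10759716; 10759720; 10759722; 10759808; 10759816; 10759840; 10759848; 10760448; 10760449; 10760450; 10760452; 10760453; 10760456; 10760457; 10760458; 10760464; 10760465; 10760472; 10760473; 10760474; 10760480; 10760481; 10760482; 10760484; 10760485; 10760486; 10760488; 10760489; 10760490; 10760512; 10760513; 10760514; 10760516; 10760517; 10760520; 10760521; 10760522; 10760528; 10760529; 10760533; 10760536; 10760537; 10760538; 10760544; 10760545; 10760546; 10760548; 10760549; 10760550; 10760552; 10760554; 10760576; 10760577; 10760584; 10760585; 10760600; 10760601; 10760608; 10760609; 10760612; 10760613; 10760616; 10760617; 10760618; 10762561; 10763776; 10763777; 10763778; 10763780;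 10763781; 10763784; 10763785; 10763786; 10763792; 10763793; 10763796; 10763800; 10763801; 10763802; 10763808; 10763809; 10763810; 10763812; 10763813; 10763814; 10763816; 10763817; 10763818; 10763840; 10763842; 10763844; 10763848; 10763850; 10763856; 10763864; 10763872; 10763874; 10763876; 10763880; 10763882; 10763904; 10763905; 10763912; 10763913; 10763928; 10763936; 10763937; 10763940; 10763944; 10763945; 10763946; 10821888; 10821889; 10821890; 10821892; 10821893; 10821894; 10821898; 10821904; 10821905; 10821906; 10821908; 10821909; 10821910; 10821914; 10821922; 10821926; 10821952; 10821954; 10821956; 10821958; 10821968; 10821970; 10821972; 10821974; 10822016; 10822017; 10822018; 10822020; 10822021; 10822022; 10822024; 10822026; 10822032; 10822033; 10822034; 10822036; 10822037; 10822038; 10822040; 10822042; 10822048; 10822050; 10822052; 10822054; 10825220; 10825222; 10825232; 10825234; 10825236; 10825238; 10825348; 10825350; 10825360; 10825362; 10825364; 10825370; 10825382; 10825984; 10825985; 10825986; 10825988; 10825989; 10825990; 10825994; 10826000; 10826001; 10826002; 10826006; 10826010; 10826018; 10826022; 10826048; 10826050; 10826052; 10826054; 10826064; 10826066; 10826112; 10826113; 10826114; 10826116; 10826117; 10826118; 10826120; 10826122; 10826128; 10826129; 10826130; 10826132; 10826134; 10826136; 10826138; 10826144; 10826146; 10826148; 10826150; 10829312; 10829314; 10829316; 10829317; 10829318; 10829322; 10829328; 10829329; 10829330; 10829332; 10829333; 10829334; 10829338; 10829346; 10829350; 10829380; 10829382; 10829392; 10829394; 10829396; 10829398; 10829440;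 10829442; 10829444; 10829445; 10829446; 10829448; 10829450; 10829456; 10829457; 10829458; 10829460; 10829461; 10829462; 10829464; 10829466; 10829472; 10829474; 10829476; 10829478; 10862888; 10862889; 10862952; 10866984; 10866985; 10867048; 10867049; 10870312; 10887424; 10887425; 10887426; 10887428; 10887429; 10887430; 10887432; 10887433; 10887434; 10887440; 10887441; 10887442; 10887444; 10887445; 10887446; 10887448; 10887449; 10887450; 10887456; 10887457; 10887458; 10887460; 10887461; 10887462; 10887466; 10887488; 10887489; 10887490; 10887492; 10887493; 10887494; 10887496; 10887498; 10887504; 10887505; 10887506; 10887508; 10887509; 10887510; 10887512; 10887514; 10887520; 10887522; 10887524; 10887526; 10887552; 10887553; 10887554; 10887556; 10887557; 10887560; 10887561; 10887562; 10887568; 10887569; 10887572; 10887573].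
Definition X3_5 : seq positive := [:: 10887576; 10887577; 10887578; 10887584; 10887585; 10887586; 10887588; 10887589; 10887590; 10887592; 10887594; 10889472; 10889473; 10889474; 10889477; 10889480; 10889481; 10889482; 10889489; 10889504; 10889505; 10889506; 10889514; 10889536; 10889537; 10889538; 10889540; 10889542; 10889544; 10889546; 10889552; 10889554; 10889568; 10889570; 10889600; 10889601; 10889602; 10889605; 10889608; 10889609; 10889610; 10889617; 10889632; 10889633; 10889634; 10889640; 10889642; 10890752; 10890754; 10890756; 10890758; 10890760; 10890762; 10890768; 10890770; 10890772; 10890776; 10890778; 10890784; 10890786; 10890788; 10890790; 10890880; 10890882; 10890884; 10890888; 10890890; 10890896; 10890904; 10890912; 10890914; 10890916; 10890922; 10891520; 10891521; 10891522; 10891524; 10891525; 10891526; 10891528; 10891529; 10891530; 10891536; 10891537; 10891538; 10891541; 10891544; 10891545; 10891546; 10891552; 10891553; 10891554; 10891556; 10891557; 10891558; 10891562; 10891584; 10891585; 10891586; 10891588; 10891589; 10891590; 10891592; 10891594; 10891600; 10891601; 10891602; 10891604; 10891606; 10891608; 10891610; 10891616; 10891618; 10891620; 10891622; 10891648; 10891649; 10891650; 10891652; 10891653; 10891656; 10891657; 10891658; 10891664; 10891665; 10891669; 10891672; 10891673; 10891674; 10891680; 10891681; 10891682; 10891684; 10891685; 10891686; 10891688; 10891690; 10894848; 10894849; 10894850; 10894852; 10894853; 10894854; 10894856; 10894857; 10894858; 10894864; 10894865; 10894866; 10894868; 10894869; 10894870; 10894872; 10894873; 10894874; 10894880; 10894881;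 10894882; 10894884; 10894885; 10894886; 10894890; 10894912; 10894914; 10894916; 10894918; 10894920; 10894922; 10894928; 10894930; 10894932; 10894936; 10894938; 10894944; 10894946; 10894948; 10894950; 10894976; 10894977; 10894978; 10894980; 10894981; 10894984; 10894985; 10894986; 10894992; 10894993; 10894996; 10895000; 10895001; 10895002; 10895008; 10895009; 10895010; 10895012; 10895013; 10895014; 10895016; 10895018; 10952962; 10952966; 10952978; 10952982; 10953088; 10953090; 10953092; 10953094; 10953104; 10953106; 10953108; 10953110; 10956438; 10960386; 10960390; 10960402; 10960406; 10960512; 10960514; 10960516; 10960518; 10960528; 10960530; 10960532; 10960534; 10993920; 10993921; 10993928; 10993929; 10993944; 10993945; 10993952; 10993953; 10993956; 10993957; 10993960; 10993961; 10993962; 10993984; 10993985; 10993992; 10993993; 10994008; 10994016; 10994017; 10994020; 10994024; 10994025; 10994026; 10994088; 10994089; 10995968; 10995969; 10995976; 10995977; 10996000; 10996001; 10996008; 10996009; 10996032; 10996033; 10996040; 10996041; 10996064; 10996065; 10996072; 10996073; 10997248; 10997256; 10997280; 10997288; 10998016; 10998017; 10998024; 10998025; 10998040; 10998041; 10998048; 10998049; 10998052; 10998053; 10998056; 10998057; 10998058; 10998080; 10998081; 10998088; 10998089; 10998104; 10998105; 10998112; 10998113; 10998116; 10998117; 10998120; 10998121; 10998122; 10998184; 10998185; 11001344; 11001345; 11001352; 11001353; 11001368; 11001376; 11001377; 11001380; 11001384; 11001385; 11001386; 11001408; 11001416; 11001440; 11001448; 11001512; 11020544; 11020545; 11020546;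 11020552; 11020554; 11020576; 11020578; 11020608; 11020610; 11020672; 11020673; 11020674; 11020680; 11020682; 11020704; 11020706; 11022592; 11022593; 11022594; 11022596; 11022597; 11022598; 11022600; 11022602; 11022608; 11022609; 11022610; 11022616; 11022618; 11022624; 11022626; 11022628; 11022630; 11022656; 11022658; 11022660; 11022662; 11022672; 11022674; 11022720; 11022721; 11022722; 11022724; 11022725; 11022726; 11022728; 11022730; 11022736; 11022737; 11022738; 11022744; 11022746; 11022752; 11022754; 11022756; 11022758; 11149568; 11149570; 11149572; 11149574; 11149584; 11149586; 11149588; 11149590; 11149696; 11149698; 11149700; 11149702; 11149712; 11149714; 11149716; 11149718; 11151616; 11151618; 11151744; 11151746; 11153664; 11153666; 11153668; 11153670; 11153680; 11153682; 11153792; 11153794; 11153796; 11153798].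
Definition X3_6 : seq positive := [:: 11153808; 11153810; 11258112; 11258113; 11258114; 11258120; 11258121; 11258122; 11258144; 11258145; 11258146; 11258152; 11258154; 11258176; 11258177; 11258178; 11258184; 11258186; 11258208; 11258210; 11258240; 11258241; 11258242; 11258248; 11258249; 11258250; 11258272; 11258273; 11258274; 11258280; 11258282; 11808256; 11808258; 11808260; 11808264; 11808266; 11808272; 11808280; 11808288; 11808290; 11808292; 11808296; 11808298; 11808384; 11808392; 11808416; 11808424; 11812352; 11812353; 11812354; 11812356; 11812357; 11812360; 11812361; 11812362; 11812368; 11812369; 11812376; 11812377; 11812384; 11812385; 11812386; 11812388; 11812389; 11812392; 11812393; 11812394; 11812416; 11812418; 11812420; 11812424; 11812426; 11812432; 11812440; 11812448; 11812450; 11812452; 11812456; 11812458; 11812480; 11812481; 11812488; 11812489; 11812512; 11812513; 11812520; 11812521; 11939328; 11939330; 11939332; 11939334; 11939336; 11939338; 11939344; 11939346; 11939348; 11939352; 11939354; 11939360; 11939362; 11939364; 11939366; 11939368; 11939370; 11939456; 11939458; 11939460; 11939464; 11939466; 11939472; 11939480; 11939488; 11939490; 11939492; 11939496; 11939498; 12042496; 12042497; 12042504; 12042505; 12042528; 12042529; 12042536; 12042537; 12042560; 12042561; 12042568; 12042569; 12042592; 12042593; 12042600; 12042601; 12045824; 12045832; 12045856; 12045864; 12049920; 12049921; 12049928; 12049929; 12049952; 12049953; 12049960; 12049961; 12049984; 12049992; 12050016; 12050024; 12067072; 12067073; 12067074; 12067076; 12067077; 12067078; 12067080; 12067082; 12067088;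 12067089; 12067090; 12067092; 12067093; 12067094; 12067096; 12067098; 12067104; 12067106; 12067108; 12067110; 12067136; 12067137; 12067138; 12067140; 12067141; 12067142; 12067146; 12067152; 12067153; 12067154; 12067156; 12067158; 12067162; 12067170; 12067174; 12067200; 12067201; 12067202; 12067204; 12067205; 12067206; 12067208; 12067209; 12067210; 12067216; 12067217; 12067218; 12067220; 12067221; 12067224; 12067225; 12067226; 12067232; 12067233; 12067234; 12067236; 12067237; 12067238; 12067242; 12069120; 12069121; 12069122; 12069128; 12069130; 12069152; 12069154; 12069184; 12069186; 12069248; 12069249; 12069250; 12069256; 12069258; 12069280; 12069282; 12070400; 12070402; 12070404; 12070406; 12070408; 12070410; 12070416; 12070418; 12070420; 12070421; 12070422; 12070424; 12070426; 12070432; 12070434; 12070436; 12070438; 12070484; 12070528; 12070530; 12070532; 12070534; 12070536; 12070538; 12070544; 12070546; 12070548; 12070552; 12070554; 12070560; 12070562; 12070564; 12070566; 12071168; 12071169; 12071170; 12071172; 12071173; 12071174; 12071176; 12071178; 12071184; 12071185; 12071186; 12071192; 12071194; 12071200; 12071202; 12071204; 12071206; 12071232; 12071233; 12071234; 12071236; 12071238; 12071242; 12071248; 12071250; 12071266; 12071296; 12071297; 12071298; 12071300; 12071301; 12071302; 12071304; 12071305; 12071306; 12071312; 12071313; 12071314; 12071320; 12071322; 12071328; 12071329; 12071330; 12071332; 12071334; 12071338; 12072468; 12074496; 12074497; 12074498; 12074500; 12074501; 12074502; 12074504; 12074506; 12074512; 12074513; 12074514; 12074516; 12074517; 12074518;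 12074520; 12074522; 12074528; 12074530; 12074532; 12074534; 12074560; 12074562; 12074564; 12074566; 12074570; 12074576; 12074578; 12074580; 12074581; 12074582; 12074586; 12074594; 12074598; 12074624; 12074625; 12074626; 12074628; 12074629; 12074630; 12074632; 12074633; 12074634; 12074640; 12074641; 12074642; 12074644; 12074645; 12074648; 12074649; 12074650; 12074656; 12074657; 12074658; 12074660; 12074661; 12074662; 12074666; 12132738; 12132742; 12132754; 12136834; 12140162; 12140166; 12140178; 12140182; 12173568; 12173569; 12173572; 12173573; 12173576; 12173577; 12173578; 12173584; 12173585; 12173592; 12173593; 12173600; 12173601; 12173602; 12173604; 12173605; 12173608; 12173609; 12173610; 12173632; 12173633; 12173636; 12173637; 12173640; 12173641; 12173642; 12173648; 12173649; 12173656; 12173657; 12173664; 12173665].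
Definition X3_7 : seq positive := [:: 12173666; 12173668; 12173669; 12173672; 12173673; 12173674; 12173704; 12173705; 12173728; 12173729; 12173736; 12173737; 12175617; 12175625; 12175649; 12175657; 12175680; 12175681; 12175688; 12175689; 12175712; 12175713; 12175720; 12175722; 12175785; 12177664; 12177665; 12177669; 12177672; 12177673; 12177674; 12177681; 12177689; 12177696; 12177697; 12177698; 12177701; 12177704; 12177705; 12177706; 12177728; 12177729; 12177732; 12177733; 12177736; 12177737; 12177738; 12177744; 12177745; 12177752; 12177753; 12177760; 12177761; 12177762; 12177764; 12177765; 12177768; 12177769; 12177770; 12177800; 12177801; 12177824; 12177825; 12177832; 12177833; 12180992; 12180993; 12180996; 12180997; 12181000; 12181001; 12181002; 12181008; 12181009; 12181016; 12181017; 12181024; 12181025; 12181026; 12181028; 12181029; 12181032; 12181033; 12181034; 12181056; 12181060; 12181064; 12181065; 12181066; 12181072; 12181080; 12181088; 12181089; 12181090; 12181092; 12181096; 12181097; 12181098; 12181128; 12181129; 12181152; 12181153; 12181160; 12181161; 12198144; 12198146; 12198148; 12198150; 12198160; 12198162; 12198164; 12198166; 12198210; 12198214; 12198226; 12198272; 12198273; 12198274; 12198276; 12198277; 12198278; 12198282; 12198288; 12198289; 12198290; 12198292; 12198294; 12198298; 12198306; 12198310; 12200192; 12200194; 12200320; 12200322; 12201472; 12201474; 12201476; 12201478; 12201488; 12201490; 12201492; 12201494; 12201600; 12201602; 12201604; 12201606; 12201616; 12201618; 12201620; 12201622; 12202240; 12202242; 12202244; 12202246; 12202256; 12202258; 12202306;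 12202368; 12202369; 12202370; 12202372; 12202374; 12202378; 12202384; 12202386; 12202402; 12205568; 12205570; 12205572; 12205574; 12205584; 12205586; 12205588; 12205590; 12205634; 12205638; 12205650; 12205654; 12205696; 12205697; 12205698; 12205700; 12205701; 12205702; 12205706; 12205712; 12205713; 12205714; 12205716; 12205717; 12205718; 12205722; 12205730; 12205734; 12239112; 12239113; 12239136; 12239137; 12239144; 12239145; 12239176; 12239177; 12239200; 12239201; 12239208; 12239209; 12241257; 12243208; 12243209; 12243232; 12243233; 12243240; 12243241; 12243272; 12243273; 12243296; 12243297; 12243304; 12243305; 12304640; 12304641; 12304642; 12304644; 12304645; 12304646; 12304648; 12304649; 12304650; 12304656; 12304657; 12304658; 12304660; 12304661; 12304664; 12304665; 12304666; 12304672; 12304673; 12304674; 12304676; 12304677; 12304678; 12304680; 12304682; 12304704; 12304705; 12304706; 12304708; 12304709; 12304710; 12304712; 12304713; 12304714; 12304720; 12304721; 12304722; 12304724; 12304725; 12304728; 12304729; 12304730; 12304736; 12304737; 12304738; 12304740; 12304741; 12304742; 12304746; 12304768; 12304769; 12304772; 12304773; 12304776; 12304777; 12304778; 12304784; 12304785; 12304792; 12304793; 12304800; 12304801; 12304802; 12304804; 12304805; 12304808; 12304809; 12304810; 12306688; 12306689; 12306690; 12306696; 12306697; 12306698; 12306720; 12306721; 12306722; 12306728; 12306730; 12306752; 12306753; 12306754; 12306760; 12306762; 12306784; 12306786; 12306816; 12306817; 12306824; 12306825; 12306848; 12306849; 12306856; 12306858; 12307968; 12307970; 12307972; 12307973;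 12307974; 12307976; 12307978; 12307984; 12307985; 12307986; 12307988; 12307992; 12307993; 12307994; 12308000; 12308002; 12308004; 12308005; 12308006; 12308008; 12308010; 12308036; 12308048; 12308056; 12308068; 12308096; 12308100; 12308104; 12308106; 12308112; 12308120; 12308128; 12308130; 12308132; 12308136; 12308138; 12308736; 12308737; 12308738; 12308740; 12308741; 12308742; 12308744; 12308745; 12308746; 12308752; 12308753; 12308754; 12308760; 12308761; 12308762; 12308768; 12308769; 12308770; 12308772; 12308773; 12308774; 12308776; 12308778; 12308800; 12308801; 12308802; 12308804; 12308805; 12308806; 12308808; 12308809; 12308810; 12308816; 12308817; 12308818; 12308824; 12308826; 12308832; 12308833; 12308834; 12308836; 12308838; 12308842; 12308864; 12308865; 12308868; 12308869; 12308872; 12308873; 12308874; 12308880].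
Definition X3_8 : seq positive := [:: 12308881; 12308888; 12308889; 12308896; 12308897; 12308898; 12308900; 12308901; 12308904; 12308905; 12308906; 12312064; 12312065; 12312066; 12312068; 12312069; 12312070; 12312072; 12312073; 12312074; 12312080; 12312081; 12312082; 12312084; 12312085; 12312088; 12312089; 12312090; 12312096; 12312097; 12312098; 12312100; 12312101; 12312102; 12312104; 12312106; 12312128; 12312130; 12312132; 12312133; 12312134; 12312136; 12312138; 12312144; 12312145; 12312146; 12312148; 12312152; 12312153; 12312154; 12312160; 12312162; 12312164; 12312165; 12312166; 12312170; 12312192; 12312193; 12312196; 12312197; 12312200; 12312201; 12312202; 12312208; 12312209; 12312216; 12312217; 12312224; 12312225; 12312226; 12312228; 12312229; 12312232; 12312233; 12312234; 12853504; 12853505; 12853506; 12853508; 12853509; 12853510; 12853512; 12853513; 12853514; 12853520; 12853521; 12853522; 12853524; 12853525; 12853528; 12853529; 12853530; 12853536; 12853537; 12853538; 12853540; 12853541; 12853542; 12853544; 12853546; 12853568; 12853569; 12853570; 12853572; 12853573; 12853574; 12853576; 12853577; 12853578; 12853584; 12853585; 12853586; 12853588; 12853589; 12853592; 12853593; 12853594; 12853600; 12853601; 12853602; 12853604; 12853605; 12853606; 12853610; 12853632; 12853633; 12853636; 12853637; 12853640; 12853641; 12853642; 12853648; 12853649; 12853656; 12853657; 12853664; 12853665; 12853666; 12853668; 12853669; 12853672; 12853673; 12853674; 12855552; 12855553; 12855554; 12855560; 12855561; 12855562; 12855584; 12855585; 12855586; 12855592; 12855594; 12855616; 12855617; 12855618;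 12855621; 12855624; 12855625; 12855626; 12855633; 12855648; 12855649; 12855650; 12855658; 12855680; 12855681; 12855688; 12855689; 12855712; 12855713; 12855720; 12855721; 12855722; 12856832; 12856834; 12856836; 12856840; 12856842; 12856848; 12856852; 12856856; 12856858; 12856864; 12856866; 12856868; 12856870; 12856872; 12856874; 12856960; 12856968; 12856984; 12856992; 12856996; 12857000; 12857002; 12857600; 12857601; 12857602; 12857604; 12857605; 12857606; 12857608; 12857609; 12857610; 12857616; 12857617; 12857618; 12857624; 12857625; 12857626; 12857632; 12857633; 12857634; 12857636; 12857637; 12857638; 12857640; 12857642; 12857664; 12857665; 12857666; 12857668; 12857669; 12857670; 12857672; 12857673; 12857674; 12857680; 12857681; 12857682; 12857685; 12857688; 12857689; 12857690; 12857696; 12857697; 12857698; 12857700; 12857701; 12857702; 12857706; 12857728; 12857729; 12857732; 12857733; 12857736; 12857737; 12857738; 12857744; 12857745; 12857752; 12857753; 12857760; 12857761; 12857762; 12857764; 12857765; 12857768; 12857769; 12857770; 12859713; 12860928; 12860929; 12860930; 12860932; 12860933; 12860934; 12860936; 12860937; 12860938; 12860944; 12860945; 12860946; 12860948; 12860949; 12860952; 12860953; 12860954; 12860960; 12860961; 12860962; 12860964; 12860965; 12860966; 12860968; 12860970; 12860992; 12860994; 12860996; 12861000; 12861002; 12861008; 12861012; 12861016; 12861018; 12861024; 12861026; 12861028; 12861030; 12861034; 12861056; 12861057; 12861060; 12861064; 12861065; 12861066; 12861072; 12861080; 12861081; 12861088; 12861089; 12861090; 12861092; 12861093; 12861096;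 12861097; 12861098; 12919040; 12919042; 12919044; 12919046; 12919056; 12919058; 12919060; 12919062; 12919106; 12919110; 12919122; 12919126; 12919168; 12919169; 12919170; 12919172; 12919173; 12919174; 12919178; 12919184; 12919185; 12919186; 12919188; 12919189; 12919190; 12919194; 12919202; 12919206; 12921088; 12921090; 12921154; 12921216; 12921217; 12921218; 12921222; 12921226; 12921234; 12921250; 12922372; 12922374; 12922384; 12922386; 12922388; 12922390; 12922500; 12922502; 12922512; 12922514; 12922516; 12922518; 12923136; 12923138; 12923140; 12923142; 12923152; 12923154; 12923202; 12923206; 12923218; 12923264; 12923265; 12923266; 12923268; 12923269; 12923270; 12923274; 12923280; 12923281; 12923282; 12923286; 12923290; 12923298; 12923302; 12926464; 12926466; 12926468; 12926470; 12926480; 12926482; 12926484; 12926486].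
Definition X3_9 : seq positive := [:: 12926534; 12926546; 12926550; 12926592; 12926594; 12926596; 12926597; 12926598; 12926602; 12926608; 12926609; 12926610; 12926612; 12926613; 12926614; 12926618; 12926626; 12926630; 12960008; 12960009; 12960032; 12960033; 12960040; 12960041; 12960072; 12960096; 12960104; 12960105; 12962089; 12962152; 12962153; 12963368; 12964104; 12964105; 12964128; 12964129; 12964136; 12964137; 12964168; 12964169; 12964192; 12964193; 12964200; 12964201; 12967432; 12967456; 12967464; 12967465; 12967528; 12984576; 12984577; 12984578; 12984580; 12984581; 12984582; 12984584; 12984586; 12984592; 12984593; 12984594; 12984596; 12984597; 12984598; 12984600; 12984602; 12984608; 12984610; 12984612; 12984614; 12984640; 12984641; 12984642; 12984644; 12984645; 12984646; 12984650; 12984656; 12984657; 12984658; 12984660; 12984661; 12984662; 12984666; 12984674; 12984678; 12984704; 12984705; 12984706; 12984708; 12984709; 12984710; 12984712; 12984713; 12984714; 12984720; 12984721; 12984722; 12984724; 12984725; 12984728; 12984729; 12984730; 12984736; 12984737; 12984738; 12984740; 12984741; 12984742; 12984746; 12986624; 12986625; 12986626; 12986632; 12986634; 12986656; 12986658; 12986688; 12986689; 12986690; 12986694; 12986698; 12986706; 12986722; 12986752; 12986753; 12986754; 12986757; 12986760; 12986761; 12986762; 12986769; 12986784; 12986785; 12986786; 12986794; 12987904; 12987906; 12987908; 12987910; 12987912; 12987914; 12987920; 12987922; 12987924; 12987926; 12987928; 12987930; 12987936; 12987938; 12987940; 12987942; 12988032; 12988034; 12988036; 12988040; 12988042; 12988048;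 12988052; 12988056; 12988058; 12988064; 12988066; 12988068; 12988070; 12988672; 12988673; 12988674; 12988676; 12988677; 12988678; 12988680; 12988682; 12988688; 12988689; 12988690; 12988696; 12988698; 12988704; 12988706; 12988708; 12988710; 12988736; 12988737; 12988738; 12988740; 12988741; 12988742; 12988746; 12988752; 12988753; 12988754; 12988758; 12988762; 12988770; 12988774; 12988800; 12988801; 12988802; 12988804; 12988805; 12988806; 12988808; 12988809; 12988810; 12988816; 12988817; 12988818; 12988821; 12988824; 12988825; 12988826; 12988832; 12988833; 12988834; 12988836; 12988837; 12988838; 12988842; 12990786; 12990849; 12992000; 12992001; 12992002; 12992004; 12992005; 12992006; 12992008; 12992010; 12992016; 12992017; 12992018; 12992020; 12992021; 12992022; 12992024; 12992026; 12992032; 12992034; 12992036; 12992038; 12992064; 12992066; 12992068; 12992070; 12992074; 12992080; 12992082; 12992084; 12992086; 12992090; 12992098; 12992102; 12992128; 12992129; 12992130; 12992132; 12992133; 12992134; 12992136; 12992137; 12992138; 12992144; 12992145; 12992146; 12992148; 12992149; 12992152; 12992153; 12992154; 12992160; 12992161; 12992162; 12992164; 12992165; 12992166; 12992170; 13050242; 13050246; 13050258; 13050262; 13054338; 13054342; 13054354; 13057666; 13057670; 13057682; 13057686; 13091072; 13091073; 13091076; 13091077; 13091080; 13091081; 13091082; 13091088; 13091089; 13091096; 13091097; 13091104; 13091105; 13091106; 13091108; 13091109; 13091112; 13091113; 13091114; 13091136; 13091137; 13091140; 13091144; 13091145; 13091146; 13091152; 13091160; 13091161; 13091168; 13091169;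 13091170; 13091172; 13091173; 13091176; 13091177; 13091178; 13091208; 13091209; 13091232; 13091233; 13091240; 13091241; 13093120; 13093121; 13093128; 13093129; 13093152; 13093153; 13093160; 13093161; 13093162; 13093184; 13093185; 13093192; 13093193; 13093216; 13093217; 13093224; 13093225; 13093226; 13093288; 13093289; 13094400; 13094408; 13094424; 13094432; 13094436; 13094440; 13094442; 13094568; 13095168; 13095169; 13095172; 13095173; 13095176; 13095177; 13095178; 13095184; 13095185; 13095192; 13095193; 13095200; 13095201; 13095202; 13095204; 13095205; 13095208; 13095209; 13095210; 13095232; 13095233; 13095236; 13095237; 13095240; 13095241; 13095242; 13095248; 13095249; 13095256; 13095257; 13095264; 13095265; 13095266; 13095268; 13095269; 13095272; 13095273; 13095274; 13095304; 13095305; 13095328; 13095329; 13095336].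
Definition X3_10 : seq positive := [:: 13095337; 13098496; 13098497; 13098500; 13098504; 13098505; 13098506; 13098512; 13098520; 13098521; 13098528; 13098529; 13098530; 13098532; 13098533; 13098536; 13098537; 13098538; 13098560; 13098568; 13098584; 13098592; 13098596; 13098600; 13098602; 13098632; 13098656; 13098664; 13098665; 13117696; 13117697; 13117698; 13117704; 13117706; 13117728; 13117730; 13117760; 13117762; 13117824; 13117825; 13117826; 13117832; 13117834; 13117856; 13117858; 13248768; 13248770; 13248896; 13248898; 13250816; 13250818; 13250820; 13250822; 13250832; 13250834; 13250944; 13250946; 13250948; 13250950; 13250960; 13250962; 13902080; 13902081; 13902082; 13902084; 13902085; 13902088; 13902089; 13902090; 13902096; 13902097; 13902104; 13902105; 13902112; 13902113; 13902114; 13902116; 13902117; 13902120; 13902121; 13902122; 13902144; 13902145; 13902146; 13902148; 13902149; 13902152; 13902153; 13902154; 13902160; 13902161; 13902168; 13902169; 13902176; 13902177; 13902178; 13902180; 13902181; 13902184; 13902185; 13902186; 13902208; 13902209; 13902216; 13902217; 13902240; 13902241; 13902248; 13902249; 13905408; 13905410; 13905412; 13905416; 13905418; 13905424; 13905432; 13905440; 13905442; 13905444; 13905448; 13905450; 13905536; 13905544; 13905568; 13905576; 13909504; 13909505; 13909506; 13909508; 13909509; 13909512; 13909513; 13909514; 13909520; 13909521; 13909528; 13909529; 13909536; 13909537; 13909538; 13909540; 13909541; 13909544; 13909545; 13909546; 13909568; 13909570; 13909572; 13909576; 13909578; 13909584; 13909592; 13909600; 13909602; 13909604; 13909608; 13909610;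 13909632; 13909633; 13909640; 13909641; 13909664; 13909665; 13909672; 13909673; 13970948; 13970950; 13970960; 13970962; 13970964; 13970966; 13970968; 13970970; 13970980; 13970982; 13971076; 13971078; 13971088; 13971090; 13971092; 13971096; 13971098; 13971108; 13971110; 14036480; 14036482; 14036484; 14036486; 14036488; 14036490; 14036496; 14036498; 14036500; 14036504; 14036506; 14036512; 14036514; 14036516; 14036518; 14036520; 14036522; 14036608; 14036610; 14036612; 14036616; 14036618; 14036624; 14036632; 14036640; 14036642; 14036644; 14036648; 14036650; 14040576; 14040577; 14040578; 14040580; 14040581; 14040582; 14040584; 14040585; 14040586; 14040592; 14040593; 14040594; 14040596; 14040597; 14040600; 14040601; 14040602; 14040608; 14040609; 14040610; 14040612; 14040613; 14040614; 14040616; 14040617; 14040618; 14040640; 14040642; 14040644; 14040646; 14040648; 14040650; 14040656; 14040658; 14040660; 14040664; 14040666; 14040672; 14040674; 14040676; 14040678; 14040680; 14040682; 14040704; 14040705; 14040706; 14040708; 14040709; 14040712; 14040713; 14040714; 14040720; 14040721; 14040728; 14040729; 14040736; 14040737; 14040738; 14040740; 14040741; 14040744; 14040745; 14040746; 14139648; 14139649; 14139656; 14139657; 14139680; 14139681; 14139688; 14139689; 14139712; 14139713; 14139720; 14139721; 14139744; 14139745; 14139752; 14139753; 14142976; 14142984; 14143008; 14143016; 14143744; 14143745; 14143752; 14143753; 14143776; 14143777; 14143784; 14143785; 14143808; 14143809; 14143816; 14143817; 14143840; 14143841; 14143848; 14143849; 14147072; 14147073; 14147080; 14147081; 14147104;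 14147105; 14147112; 14147113; 14147136; 14147144; 14147168; 14147176; 14164224; 14164225; 14164226; 14164228; 14164229; 14164230; 14164232; 14164234; 14164240; 14164241; 14164242; 14164244; 14164245; 14164246; 14164248; 14164250; 14164256; 14164258; 14164260; 14164262; 14164288; 14164290; 14164292; 14164294; 14164304; 14164306; 14164308; 14164310; 14164352; 14164353; 14164354; 14164356; 14164357; 14164358; 14164360; 14164362; 14164368; 14164369; 14164370; 14164372; 14164373; 14164376; 14164378; 14164384; 14164386; 14164388; 14164390; 14166272; 14166273; 14166274; 14166280; 14166282; 14166304; 14166306; 14166336; 14166338; 14166400; 14166401; 14166402; 14166408; 14166410; 14166432; 14166434; 14167552; 14167554; 14167556; 14167558; 14167560; 14167562; 14167568; 14167570; 14167572; 14167573; 14167574; 14167576; 14167578].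
Definition X3_11 : seq positive := [:: 14167584; 14167586; 14167588; 14167590; 14167636; 14167638; 14167680; 14167682; 14167684; 14167686; 14167688; 14167690; 14167696; 14167698; 14167700; 14167701; 14167704; 14167706; 14167712; 14167714; 14167716; 14167718; 14168320; 14168321; 14168322; 14168324; 14168325; 14168326; 14168328; 14168330; 14168336; 14168337; 14168338; 14168344; 14168346; 14168352; 14168354; 14168356; 14168358; 14168384; 14168386; 14168388; 14168390; 14168400; 14168402; 14168448; 14168449; 14168450; 14168452; 14168453; 14168454; 14168456; 14168458; 14168464; 14168465; 14168466; 14168472; 14168474; 14168480; 14168482; 14168484; 14168486; 14171648; 14171649; 14171650; 14171652; 14171653; 14171654; 14171656; 14171658; 14171664; 14171665; 14171666; 14171668; 14171669; 14171670; 14171672; 14171674; 14171680; 14171682; 14171684; 14171686; 14171712; 14171714; 14171716; 14171718; 14171728; 14171730; 14171732; 14171734; 14171776; 14171777; 14171778; 14171780; 14171781; 14171782; 14171784; 14171786; 14171792; 14171793; 14171794; 14171796; 14171797; 14171800; 14171802; 14171808; 14171810; 14171812; 14171814; 14270720; 14270721; 14270722; 14270724; 14270725; 14270728; 14270729; 14270730; 14270736; 14270737; 14270744; 14270745; 14270752; 14270753; 14270754; 14270756; 14270757; 14270760; 14270761; 14270762; 14270784; 14270785; 14270786; 14270788; 14270789; 14270792; 14270793; 14270794; 14270800; 14270801; 14270808; 14270809; 14270816; 14270817; 14270818; 14270820; 14270821; 14270824; 14270826; 14270848; 14270849; 14270856; 14270857; 14270880; 14270881; 14270888; 14270889; 14272769;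 14272777; 14272801; 14272809; 14272832; 14272833; 14272840; 14272841; 14272842; 14272864; 14272865; 14272866; 14272872; 14272874; 14272905; 14272929; 14272937; 14274816; 14274817; 14274818; 14274821; 14274824; 14274825; 14274826; 14274833; 14274841; 14274848; 14274849; 14274850; 14274853; 14274856; 14274857; 14274858; 14274880; 14274881; 14274882; 14274884; 14274885; 14274888; 14274889; 14274890; 14274896; 14274897; 14274904; 14274905; 14274912; 14274913; 14274914; 14274916; 14274917; 14274920; 14274922; 14274944; 14274945; 14274952; 14274953; 14274976; 14274977; 14274984; 14274985; 14295296; 14295298; 14295300; 14295302; 14295312; 14295314; 14295316; 14295318; 14295424; 14295426; 14295428; 14295430; 14295440; 14295442; 14295444; 14295446; 14297344; 14297346; 14297472; 14297474; 14298624; 14298626; 14298628; 14298630; 14298640; 14298642; 14298644; 14298646; 14298752; 14298754; 14298756; 14298758; 14298768; 14298770; 14298772; 14298774; 14299392; 14299394; 14299396; 14299398; 14299408; 14299410; 14299520; 14299522; 14299524; 14299526; 14299536; 14299538; 14302720; 14302722; 14302724; 14302726; 14302736; 14302738; 14302740; 14302742; 14302848; 14302850; 14302852; 14302854; 14302864; 14302866; 14302868; 14302870; 14338377; 14338401; 14338409; 14340352; 14340353; 14340360; 14340361; 14340384; 14340385; 14340392; 14340393; 14340416; 14340417; 14340424; 14340425; 14340448; 14340449; 14340456; 14340457; 14401792; 14401793; 14401794; 14401796; 14401797; 14401798; 14401800; 14401801; 14401802; 14401808; 14401809; 14401810; 14401812; 14401813; 14401816; 14401817; 14401818; 14401824;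 14401825; 14401826; 14401828; 14401829; 14401830; 14401832; 14401834; 14401856; 14401857; 14401858; 14401860; 14401861; 14401862; 14401864; 14401866; 14401872; 14401873; 14401874; 14401876; 14401877; 14401880; 14401882; 14401888; 14401890; 14401892; 14401894; 14401920; 14401921; 14401922; 14401924; 14401925; 14401928; 14401929; 14401930; 14401936; 14401937; 14401944; 14401945; 14401952; 14401953; 14401954; 14401956; 14401957; 14401960; 14401962; 14403840; 14403841; 14403842; 14403848; 14403849; 14403850; 14403872; 14403873; 14403874; 14403880; 14403882; 14403904; 14403905; 14403906; 14403912; 14403914; 14403936; 14403938; 14403968; 14403969; 14403976; 14403977; 14403978; 14404000; 14404001; 14404002; 14404008; 14404010; 14405888; 14405889; 14405890; 14405892; 14405893; 14405894; 14405896; 14405897; 14405898; 14405904].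
Definition X3_12 : seq positive := [:: 14405905; 14405906; 14405912; 14405913; 14405914; 14405920; 14405921; 14405922; 14405924; 14405925; 14405926; 14405928; 14405930; 14405952; 14405953; 14405954; 14405956; 14405957; 14405958; 14405960; 14405962; 14405968; 14405969; 14405970; 14405976; 14405978; 14405984; 14405986; 14405988; 14405990; 14406016; 14406017; 14406018; 14406020; 14406021; 14406024; 14406025; 14406026; 14406032; 14406033; 14406040; 14406041; 14406048; 14406049; 14406050; 14406052; 14406053; 14406056; 14406058; 14409216; 14409217; 14409218; 14409220; 14409221; 14409222; 14409224; 14409225; 14409226; 14409232; 14409233; 14409234; 14409236; 14409237; 14409240; 14409241; 14409242; 14409248; 14409249; 14409250; 14409252; 14409253; 14409254; 14409256; 14409258; 14409280; 14409282; 14409284; 14409285; 14409286; 14409288; 14409290; 14409296; 14409297; 14409298; 14409300; 14409301; 14409304; 14409306; 14409312; 14409314; 14409316; 14409318; 14409344; 14409345; 14409346; 14409348; 14409349; 14409352; 14409353; 14409354; 14409360; 14409361; 14409368; 14409369; 14409376; 14409377; 14409378; 14409380; 14409381; 14409384; 14409386; 14950656; 14950657; 14950658; 14950660; 14950661; 14950664; 14950665; 14950666; 14950672; 14950673; 14950680; 14950681; 14950688; 14950689; 14950690; 14950692; 14950693; 14950696; 14950697; 14950698; 14950720; 14950721; 14950722; 14950724; 14950725; 14950728; 14950729; 14950730; 14950736; 14950737; 14950744; 14950745; 14950752; 14950753; 14950754; 14950756; 14950757; 14950760; 14950762; 14950784; 14950785; 14950792; 14950793; 14950816; 14950817; 14950824;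 14950825; 14952704; 14952705; 14952706; 14952712; 14952713; 14952714; 14952736; 14952737; 14952738; 14952744; 14952745; 14952746; 14952768; 14952769; 14952770; 14952773; 14952776; 14952777; 14952778; 14952785; 14952793; 14952800; 14952801; 14952802; 14952805; 14952808; 14952810; 14952832; 14952833; 14952840; 14952841; 14952864; 14952865; 14952872; 14952873; 14953984; 14953986; 14953988; 14953992; 14953994; 14954000; 14954008; 14954016; 14954018; 14954020; 14954024; 14954026; 14954112; 14954120; 14954144; 14954152; 14954752; 14954753; 14954754; 14954756; 14954757; 14954760; 14954761; 14954762; 14954768; 14954769; 14954776; 14954777; 14954784; 14954785; 14954786; 14954788; 14954789; 14954792; 14954793; 14954794; 14954816; 14954817; 14954818; 14954820; 14954821; 14954824; 14954825; 14954826; 14954832; 14954833; 14954840; 14954841; 14954848; 14954849; 14954850; 14954852; 14954853; 14954856; 14954858; 14954880; 14954881; 14954888; 14954889; 14954912; 14954913; 14954920; 14954921; 14958080; 14958081; 14958082; 14958084; 14958085; 14958088; 14958089; 14958090; 14958096; 14958097; 14958104; 14958105; 14958112; 14958113; 14958114; 14958116; 14958117; 14958120; 14958121; 14958122; 14958144; 14958146; 14958148; 14958152; 14958154; 14958160; 14958168; 14958176; 14958178; 14958180; 14958184; 14958186; 14958208; 14958209; 14958216; 14958217; 14958240; 14958241; 14958248; 14958249; 15016192; 15016193; 15016194; 15016196; 15016197; 15016198; 15016200; 15016202; 15016208; 15016209; 15016210; 15016212; 15016213; 15016214; 15016216; 15016218; 15016224; 15016226; 15016228; 15016230; 15016256;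 15016258; 15016260; 15016262; 15016272; 15016274; 15016276; 15016278; 15016320; 15016321; 15016322; 15016324; 15016325; 15016326; 15016328; 15016330; 15016336; 15016337; 15016338; 15016340; 15016341; 15016344; 15016346; 15016352; 15016354; 15016356; 15016358; 15019524; 15019526; 15019536; 15019538; 15019540; 15019542; 15019546; 15019558; 15019652; 15019654; 15019664; 15019666; 15019668; 15019672; 15019674; 15019684; 15019686; 15023616; 15023618; 15023620; 15023621; 15023622; 15023624; 15023626; 15023632; 15023633; 15023634; 15023636; 15023637; 15023638; 15023640; 15023642; 15023648; 15023650; 15023652; 15023654; 15023684; 15023686; 15023696; 15023698; 15023700; 15023702; 15023744; 15023746; 15023748; 15023749; 15023750; 15023752; 15023754; 15023760; 15023761; 15023762; 15023764; 15023765; 15023768; 15023770; 15023776].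
Definition X3_13 : seq positive := [:: 15023778; 15023780; 15023782; 15081728; 15081729; 15081730; 15081732; 15081733; 15081734; 15081736; 15081737; 15081738; 15081744; 15081745; 15081746; 15081748; 15081749; 15081752; 15081753; 15081754; 15081760; 15081761; 15081762; 15081764; 15081765; 15081766; 15081768; 15081770; 15081792; 15081793; 15081794; 15081796; 15081797; 15081798; 15081800; 15081802; 15081808; 15081809; 15081810; 15081812; 15081813; 15081816; 15081818; 15081824; 15081826; 15081828; 15081830; 15081856; 15081857; 15081858; 15081860; 15081861; 15081864; 15081865; 15081866; 15081872; 15081873; 15081880; 15081881; 15081888; 15081889; 15081890; 15081892; 15081893; 15081896; 15081898; 15085056; 15085058; 15085060; 15085062; 15085064; 15085066; 15085072; 15085074; 15085076; 15085080; 15085082; 15085088; 15085090; 15085092; 15085094; 15085098; 15085184; 15085186; 15085188; 15085192; 15085194; 15085200; 15085208; 15085216; 15085218; 15085220; 15085224; 15085226; 15085824; 15085825; 15085826; 15085828; 15085829; 15085830; 15085832; 15085833; 15085834; 15085840; 15085841; 15085842; 15085845; 15085848; 15085849; 15085850; 15085856; 15085857; 15085858; 15085860; 15085861; 15085862; 15085864; 15085866; 15085888; 15085889; 15085890; 15085892; 15085893; 15085894; 15085896; 15085898; 15085904; 15085905; 15085906; 15085908; 15085909; 15085912; 15085914; 15085920; 15085922; 15085924; 15085926; 15085952; 15085953; 15085954; 15085956; 15085957; 15085960; 15085961; 15085962; 15085968; 15085969; 15085976; 15085977; 15085984; 15085985; 15085986; 15085988; 15085989; 15085992; 15085994; 15089152;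 15089153; 15089154; 15089156; 15089157; 15089158; 15089160; 15089161; 15089162; 15089168; 15089169; 15089170; 15089172; 15089173; 15089176; 15089177; 15089178; 15089184; 15089185; 15089186; 15089188; 15089189; 15089190; 15089192; 15089194; 15089216; 15089218; 15089220; 15089222; 15089224; 15089226; 15089232; 15089234; 15089236; 15089240; 15089242; 15089248; 15089250; 15089252; 15089254; 15089280; 15089281; 15089282; 15089284; 15089285; 15089288; 15089289; 15089290; 15089296; 15089297; 15089304; 15089305; 15089312; 15089313; 15089314; 15089316; 15089317; 15089320; 15089322; 15150614; 15150740; 15150742; 15154688; 15154690; 15154692; 15154694; 15154704; 15154706; 15154708; 15154710; 15154816; 15154818; 15154820; 15154822; 15154832; 15154834; 15154836; 15154838; 15188224; 15188225; 15188232; 15188233; 15188256; 15188257; 15188264; 15188265; 15188288; 15188289; 15188296; 15188297; 15188320; 15188321; 15188328; 15188329; 15190272; 15190273; 15190280; 15190281; 15190304; 15190305; 15190312; 15190313; 15190336; 15190337; 15190344; 15190345; 15190368; 15190369; 15190376; 15190377; 15191552; 15191560; 15191584; 15191592; 15192320; 15192321; 15192328; 15192329; 15192352; 15192353; 15192360; 15192361; 15192384; 15192385; 15192392; 15192393; 15192416; 15192417; 15192424; 15192425; 15195648; 15195649; 15195656; 15195657; 15195680; 15195681; 15195688; 15195689; 15195712; 15195720; 15195744; 15195752; 15212800; 15212801; 15212802; 15212804; 15212805; 15212806; 15212808; 15212810; 15212816; 15212817; 15212818; 15212820; 15212821; 15212822; 15212824; 15212826; 15212832; 15212834; 15212836;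 15212838; 15212864; 15212866; 15212868; 15212870; 15212880; 15212882; 15212884; 15212886; 15212928; 15212929; 15212930; 15212932; 15212933; 15212934; 15212936; 15212938; 15212944; 15212945; 15212946; 15212948; 15212949; 15212950; 15212952; 15212954; 15212960; 15212962; 15212964; 15212966; 15214848; 15214849; 15214850; 15214856; 15214858; 15214880; 15214882; 15214912; 15214914; 15214976; 15214977; 15214978; 15214984; 15214986; 15215008; 15215010; 15216896; 15216897; 15216898; 15216900; 15216901; 15216902; 15216904; 15216906; 15216912; 15216913; 15216914; 15216920; 15216922; 15216928; 15216930; 15216932; 15216934; 15216960; 15216962; 15216964; 15216966; 15216976; 15216978; 15217024; 15217025; 15217026; 15217028; 15217029; 15217030; 15217032; 15217034; 15217040; 15217041; 15217042; 15217048; 15217050; 15217056; 15217058].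
Definition X3_14 : seq positive := [:: 15217060; 15217062; 15321345; 15321353; 15321377; 15321385; 15321408; 15321409; 15321410; 15321416; 15321417; 15321418; 15321440; 15321441; 15321442; 15321448; 15321450; 15321473; 15321481; 15321505; 15321513; 15343872; 15343874; 15343876; 15343878; 15343888; 15343890; 15343892; 15343894; 15344000; 15344002; 15344004; 15344006; 15344016; 15344018; 15344020; 15344022; 15345920; 15345922; 15346048; 15346050; 15347968; 15347970; 15347972; 15347974; 15347984; 15347986; 15348096; 15348098; 15348100; 15348102; 15348112; 15348114; 15351296; 15351298; 15351300; 15351302; 15351312; 15351314; 15351316; 15351318; 15351424; 15351426; 15351428; 15351430; 15351440; 15351442; 15351444; 15351446; 15452416; 15452417; 15452418; 15452424; 15452425; 15452426; 15452448; 15452449; 15452450; 15452456; 15452458; 15452480; 15452481; 15452482; 15452488; 15452490; 15452512; 15452514; 15452544; 15452545; 15452546; 15452552; 15452553; 15452554; 15452576; 15452577; 15452578; 15452584; 15452586; 15454464; 15454465; 15454466; 15454468; 15454469; 15454470; 15454472; 15454473; 15454474; 15454480; 15454481; 15454482; 15454488; 15454489; 15454490; 15454496; 15454497; 15454498; 15454500; 15454501; 15454502; 15454504; 15454506; 15454528; 15454529; 15454530; 15454532; 15454533; 15454534; 15454536; 15454538; 15454544; 15454545; 15454546; 15454552; 15454554; 15454560; 15454562; 15454564; 15454566; 15454592; 15454593; 15454594; 15454596; 15454597; 15454598; 15454600; 15454601; 15454602; 15454608; 15454609; 15454610; 15454616; 15454617; 15454618; 15454624; 15454625; 15454626; 15454628;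 15454629; 15454630; 15454632; 15454634; 16002560; 16002562; 16002564; 16002568; 16002570; 16002576; 16002584; 16002592; 16002594; 16002596; 16002600; 16002602; 16002688; 16002696; 16002720; 16002728; 16240128; 16240136; 16240160; 16240168; 16244224; 16244225; 16244232; 16244233; 16244256; 16244257; 16244264; 16244265; 16244288; 16244296; 16244320; 16244328; 16261376; 16261377; 16261378; 16261380; 16261381; 16261382; 16261384; 16261385; 16261386; 16261392; 16261393; 16261394; 16261396; 16261397; 16261398; 16261400; 16261401; 16261402; 16261408; 16261409; 16261410; 16261412; 16261413; 16261414; 16261418; 16261440; 16261441; 16261442; 16261444; 16261445; 16261446; 16261448; 16261450; 16261456; 16261457; 16261458; 16261460; 16261461; 16261462; 16261464; 16261466; 16261472; 16261474; 16261476; 16261478; 16261504; 16261505; 16261506; 16261508; 16261509; 16261512; 16261513; 16261514; 16261520; 16261521; 16261524; 16261525; 16261528; 16261529; 16261530; 16261536; 16261537; 16261538; 16261540; 16261541; 16261542; 16261544; 16261546; 16263424; 16263425; 16263426; 16263432; 16263434; 16263456; 16263458; 16263488; 16263489; 16263490; 16263498; 16263522; 16263552; 16263553; 16263554; 16263560; 16263561; 16263562; 16263584; 16263585; 16263586; 16263594; 16264704; 16264706; 16264708; 16264710; 16264712; 16264714; 16264720; 16264722; 16264724; 16264725; 16264726; 16264728; 16264730; 16264736; 16264738; 16264740; 16264742; 16264788; 16264832; 16264834; 16264836; 16264840; 16264842; 16264848; 16264852; 16264856; 16264858; 16264864; 16264866; 16264868; 16264870; 16264874; 16265472; 16265473;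 16265474; 16265476; 16265477; 16265478; 16265480; 16265481; 16265482; 16265488; 16265489; 16265490; 16265496; 16265498; 16265504; 16265505; 16265506; 16265508; 16265510; 16265514; 16265536; 16265537; 16265538; 16265540; 16265541; 16265542; 16265544; 16265546; 16265552; 16265553; 16265554; 16265562; 16265568; 16265570; 16265574; 16265600; 16265601; 16265602; 16265604; 16265605; 16265608; 16265609; 16265610; 16265616; 16265617; 16265624; 16265625; 16265626; 16265632; 16265633; 16265634; 16265636; 16265637; 16265638; 16265640; 16265642; 16266772; 16268800; 16268801; 16268802; 16268804; 16268805; 16268806; 16268808; 16268809; 16268810; 16268816; 16268817; 16268818; 16268820; 16268821; 16268822; 16268824; 16268825; 16268826; 16268832; 16268833; 16268834; 16268836; 16268837; 16268838; 16268842; 16268864; 16268866; 16268868].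
Definition X3_15 : seq positive := [:: 16268870; 16268872; 16268874; 16268880; 16268882; 16268884; 16268885; 16268886; 16268888; 16268890; 16268896; 16268898; 16268900; 16268902; 16268928; 16268929; 16268930; 16268932; 16268933; 16268936; 16268937; 16268938; 16268944; 16268945; 16268948; 16268949; 16268952; 16268953; 16268954; 16268960; 16268961; 16268962; 16268964; 16268965; 16268966; 16268968; 16268970; 16326914; 16326918; 16326930; 16327040; 16327042; 16327044; 16327046; 16327056; 16327058; 16327062; 16329090; 16330374; 16330386; 16330390; 16331010; 16331136; 16331138; 16331142; 16331154; 16334338; 16334342; 16334354; 16334358; 16334464; 16334466; 16334468; 16334470; 16334480; 16334482; 16334484; 16334486; 16367872; 16367873; 16367880; 16367881; 16367896; 16367897; 16367904; 16367905; 16367908; 16367909; 16367912; 16367913; 16367914; 16367936; 16367937; 16367944; 16367945; 16367960; 16367961; 16367968; 16367969; 16367972; 16367973; 16367976; 16367977; 16367978; 16368040; 16368041; 16369921; 16369929; 16369953; 16369961; 16369984; 16369985; 16369992; 16369993; 16370016; 16370017; 16370024; 16370025; 16371200; 16371208; 16371224; 16371232; 16371236; 16371240; 16371241; 16371242; 16371304; 16371368; 16371968; 16371969; 16371976; 16371977; 16371993; 16372000; 16372001; 16372005; 16372008; 16372009; 16372010; 16372032; 16372033; 16372040; 16372041; 16372056; 16372057; 16372064; 16372065; 16372068; 16372069; 16372072; 16372073; 16372074; 16372136; 16372137; 16375296; 16375297; 16375304; 16375305; 16375320; 16375321; 16375328; 16375329; 16375332; 16375333; 16375336; 16375337; 16375338;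 16375360; 16375368; 16375384; 16375392; 16375396; 16375400; 16375401; 16375402; 16375464; 16375465; 16392448; 16392449; 16392450; 16392452; 16392453; 16392454; 16392458; 16392464; 16392465; 16392466; 16392468; 16392470; 16392474; 16392482; 16392486; 16392512; 16392514; 16392516; 16392518; 16392528; 16392530; 16392534; 16392576; 16392577; 16392578; 16392580; 16392581; 16392582; 16392584; 16392586; 16392592; 16392593; 16392594; 16392596; 16392597; 16392598; 16392600; 16392602; 16392608; 16392610; 16392612; 16392614; 16394496; 16394498; 16394562; 16394624; 16394625; 16394626; 16394634; 16394658; 16395776; 16395778; 16395780; 16395782; 16395792; 16395794; 16395796; 16395798; 16395904; 16395906; 16395908; 16395910; 16395914; 16395920; 16395922; 16395924; 16395926; 16395930; 16395938; 16395942; 16396544; 16396545; 16396546; 16396548; 16396550; 16396554; 16396560; 16396562; 16396578; 16396608; 16396610; 16396614; 16396626; 16396672; 16396673; 16396674; 16396676; 16396677; 16396678; 16396680; 16396682; 16396688; 16396689; 16396690; 16396698; 16396704; 16396706; 16396710; 16399872; 16399873; 16399874; 16399876; 16399877; 16399878; 16399882; 16399888; 16399889; 16399890; 16399892; 16399893; 16399894; 16399898; 16399906; 16399910; 16399936; 16399938; 16399940; 16399942; 16399952; 16399954; 16399956; 16399958; 16400000; 16400001; 16400002; 16400004; 16400005; 16400006; 16400008; 16400010; 16400016; 16400017; 16400018; 16400020; 16400021; 16400022; 16400024; 16400026; 16400032; 16400034; 16400036; 16400038; 16433448; 16433449; 16433512; 16433513; 16437544; 16437545; 16437608; 16437609;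 16440872; 16440873; 16440936; 16498944; 16498945; 16498946; 16498948; 16498949; 16498952; 16498953; 16498954; 16498960; 16498961; 16498964; 16498965; 16498968; 16498969; 16498970; 16498976; 16498977; 16498978; 16498980; 16498981; 16498982; 16498984; 16498985; 16498986; 16499008; 16499009; 16499010; 16499012; 16499013; 16499016; 16499017; 16499018; 16499024; 16499025; 16499028; 16499029; 16499032; 16499033; 16499034; 16499040; 16499041; 16499042; 16499044; 16499045; 16499046; 16499048; 16499050; 16499072; 16499073; 16499080; 16499081; 16499096; 16499097; 16499104; 16499105; 16499108; 16499109; 16499112; 16499113; 16499114; 16500992; 16500993; 16500994; 16501000; 16501001; 16501002; 16501024; 16501025; 16501026; 16501032; 16501034; 16501056; 16501057; 16501058; 16501064; 16501065; 16501066; 16501088; 16501089; 16501090].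
Definition X3_16 : seq positive := [:: 16501098; 16501120; 16501121; 16501128; 16501129; 16501152; 16501153; 16501160; 16501161; 16502272; 16502274; 16502276; 16502280; 16502282; 16502288; 16502292; 16502296; 16502297; 16502298; 16502304; 16502306; 16502308; 16502309; 16502310; 16502312; 16502314; 16502360; 16502372; 16502400; 16502408; 16502424; 16502432; 16502436; 16502440; 16502442; 16503040; 16503041; 16503042; 16503044; 16503045; 16503048; 16503049; 16503050; 16503056; 16503057; 16503064; 16503065; 16503066; 16503072; 16503073; 16503074; 16503076; 16503077; 16503078; 16503080; 16503081; 16503082; 16503104; 16503105; 16503106; 16503108; 16503109; 16503112; 16503113; 16503114; 16503120; 16503121; 16503128; 16503129; 16503130; 16503136; 16503137; 16503138; 16503140; 16503141; 16503142; 16503144; 16503146; 16503168; 16503169; 16503176; 16503177; 16503192; 16503193; 16503200; 16503201; 16503204; 16503205; 16503208; 16503209; 16503210; 16504344; 16504356; 16506368; 16506369; 16506370; 16506372; 16506373; 16506376; 16506377; 16506378; 16506384; 16506385; 16506388; 16506389; 16506392; 16506393; 16506394; 16506400; 16506401; 16506402; 16506404; 16506405; 16506406; 16506408; 16506409; 16506410; 16506432; 16506434; 16506436; 16506440; 16506442; 16506448; 16506452; 16506456; 16506457; 16506458; 16506464; 16506466; 16506468; 16506469; 16506470; 16506472; 16506474; 16506496; 16506497; 16506504; 16506505; 16506520; 16506521; 16506528; 16506529; 16506532; 16506533; 16506536; 16506537; 16506538].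
Definition Xl3 : seq positive := X3_0 ++ X3_1 ++ X3_2 ++ X3_3 ++ X3_4 ++ X3_5 ++ X3_6 ++ X3_7 ++ X3_8 ++ X3_9 ++ X3_10 ++ X3_11 ++ X3_12 ++ X3_13 ++ X3_14 ++ X3_15 ++ X3_16.
Local Close Scope positive_scope.

Definition mkset (l : seq positive) := foldl (fun s k => PositiveSet.add k s) PositiveSet.empty l.
Definition Xset2 := mkset Xl2.
Definition Xset3 := mkset Xl3.
Definition Xset (mode : bool) := if mode then Xset2 else Xset3.

Definition inXb (X : PositiveSet.t) (s : state) : bool :=
  PositiveSet.mem (encode s) X && state_eqb (decode (encode s)) s.

Definition cls (k : bool) (c : letter) : bool * lin * lin * letter :=
  if k then (true, ladd (glin c) (0,-1)%Z, ladd (glin c) (0,-1)%Z, nonl c)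
  else (c != S, (0,0)%Z, ladd (glin c) (0,-2)%Z, L).

Definition trans_ok (X : PositiveSet.t) (mode : bool) (s : state) (ka kb kc kd : bool) (dd : Z) : bool :=
  let '(zL,zS,zM,c1,c2,c3,c4) := s in
  let '(va,loa,hia,la) := cls ka c1 in
  let '(vb,lob,hib,lb) := cls kb c2 in
  let '(vc,loc,hic,lc) := cls kc c3 in
  let '(vd,lod,hid,ld) := cls kd c4 in
  let lo := ladd (ladd (lneg hia) lob) (ladd loc (lneg hid)) in
  let hi := ladd (ladd (lneg loa) hib) (ladd hic (lneg lod)) in
  let need := ladd (0,dd)%Z (lneg (zL + zM, zL + zS)%Z) in
  ~~ [&& va, vb, vc & vd] || ~~ feas mode (ladd need (lneg lo)) (ladd hi (lneg need))
  || inXb X ((dd - (zL + zM) - zS)%Z, (zL + zM)%Z, zS, la, lb, lc, ld).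

Definition bools := [:: false; true].
Definition drange := [:: (-5)%Z; (-4)%Z; (-3)%Z; (-2)%Z; (-1)%Z; 0%Z; 1%Z; 2%Z; 3%Z; 4%Z; 5%Z].

Definition check_state X mode s :=
  all (fun ka => all (fun kb => all (fun kc => all (fun kd =>
    all (fun dd => trans_ok X mode s ka kb kc kd dd) drange) bools) bools) bools) bools.

Definition allnn (mode : bool) (e : lin) : bool :=
  if mode then (0 <=? lev e 2)%Z else (0 <=? e.1)%Z && (0 <=? lev e 3)%Z.

Definition ovf_ok mode (s : state) : bool :=
  let '(zL,zS,zM,c1,c2,c3,c4) := s in
  let G := (zL + zM, zL + zS)%Z in
  (~~ (zL + zS + zM =? 5)%Z ||
     allnn mode (ladd (ladd G (0,1)%Z) (lneg (ladd (ladd (glin c1) (glin c4)) (0,4)%Z))))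
  && (~~ (zL + zS + zM =? -5)%Z ||
     allnn mode (lneg (ladd (ladd G (0,-1)%Z) (ladd (ladd (glin c2) (glin c3)) (0,4)%Z)))).

Definition fin_ok (s : state) : bool :=
  let '(zL,zS,zM,c1,c2,c3,c4) := s in
  ~~ (zL + zS + zM =? 0)%Z || ((-3 <=? zL)%Z && (zL <=? 3)%Z).

Definition check_allX X mode :=
  PositiveSet.for_all (fun k => let s := decode k in
     [&& check_state X mode s, ovf_ok mode s & fin_ok s]) X
  && inXb X (0,0,0,L,L,L,L)%Z.

Lemma check2 : check_allX (Xset true) true = true. Proof. vm_compute. reflexivity. Qed.
Lemma check3 : check_allX (Xset false) false = true. Proof. vm_compute. reflexivity. Qed.

Definition PZ (u : nat -> letter) (a : letter) (i : nat) : Z := Z.of_nat (cnt u a i).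
Definition dZ u x a b c d : Z := (PZ u x b - PZ u x a - PZ u x d + PZ u x c)%Z.
Definition st (u : nat -> letter) (a b c d : nat) : state :=
  (dZ u L a b c d, dZ u S a b c d, dZ u M a b c d, u a, u b, u c, u d).

Lemma cnt_sum u i : cnt u L i + cnt u S i + cnt u M i = i.
Proof. elim: i => [|i IH] //=; case: (u i) => /=; lia. Qed.

Lemma state_eqbP s t : state_eqb s t = true -> s = t.
Proof.
case: s => [[[[[[a b] c] c1] c2] c3] c4]; case: t => [[[[[[a' b'] c'] d1] d2] d3] d4] /=.
move=> /andP[/Z.eqb_eq -> /andP[/Z.eqb_eq -> /andP[/Z.eqb_eq ->
  /andP[/eqP -> /andP[/eqP -> /andP[/eqP -> /eqP ->]]]]]].
by [].
Qed.

Lemma inX_check X mode : check_allX X mode = true -> forall s, inXb X s = true ->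
  [&& check_state X mode s, ovf_ok mode s & fin_ok s].
Proof.
move=> /andP[hall _] s /andP[hm he].
have E := state_eqbP _ _ he.
move: hall; rewrite /is_true PositiveSet.for_all_spec; last by intros x y Hxy; rewrite Hxy.
move=> H.
have := H (encode s) (proj1 (PositiveSet.mem_spec _ _) hm).
by rewrite /= E.
Qed.

Lemma lev_add x y P : lev (ladd x y) P = (lev x P + lev y P)%Z.
Proof. rewrite /lev /ladd /=; lia. Qed.
Lemma lev_neg x P : lev (lneg x) P = (- lev x P)%Z.
Proof. rewrite /lev /lneg /=; lia. Qed.
Lemma lev_glin p c : lev (glin c) (Z.of_nat p) = Z.of_nat (gn p c).
Proof. rewrite /lev; case: c; cbn [glin fst snd gn]; lia. Qed.

Definition modeok (mode : bool) (p : nat) := if mode then p = 2 else 3 <= p.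

Lemma feas_sound mode f h p : modeok mode p ->
  (0 <= lev f (Z.of_nat p))%Z -> (0 <= lev h (Z.of_nat p))%Z -> feas mode f h = true.
Proof.
case: mode => /= hm.
  by subst p => /= h1 h2; apply/andP; split; apply/Z.leb_le.
case: f => a1 b1; case: h => a2 b2; move=> h1 h2.
rewrite /lev in h1 h2; cbn [fst snd] in h1, h2.
rewrite /feas /lev; cbn [fst snd].
have hp : (3 <= Z.of_nat p)%Z by lia.
repeat (apply/andP; split); apply/negP.
- by move=> /andP[/Z.eqb_eq E /Z.ltb_lt]; subst; lia.
- by move=> /andP[/Z.eqb_eq E /Z.ltb_lt]; subst; lia.
- by move=> /andP[/Z.ltb_lt ? /Z.ltb_lt ?]; nia.
- by move=> /andP[/Z.ltb_lt ? /Z.ltb_lt ?]; nia.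
- by move=> /and3P[/Z.ltb_lt ? /Z.ltb_lt ? /Z.ltb_lt ?]; nia.
- by move=> /and3P[/Z.ltb_lt ? /Z.ltb_lt ? /Z.ltb_lt ?]; nia.
Qed.

Lemma allnn_sound mode e p : modeok mode p -> allnn mode e = true -> (0 <= lev e (Z.of_nat p))%Z.
Proof.
case: e => a b; case: mode => /= hm.
  by subst p => /Z.leb_le.
move=> /andP[/Z.leb_le h1 /Z.leb_le h2]; rewrite /lev in h2 *; cbn [fst snd] in h1, h2 |- *.
have hp : (3 <= Z.of_nat p)%Z by lia.
nia.
Qed.

Lemma cls_ok p c r : 0 < p -> r < gn p c ->
  let k := ~~ (r.+1 < gn p c) in
  [/\ (cls k c).1.1.1 = true, (lev (cls k c).1.1.2 (Z.of_nat p) <= Z.of_nat r)%Z,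
      (Z.of_nat r <= lev (cls k c).1.2 (Z.of_nat p))%Z &
      (cls k c).2 = (if r.+1 < gn p c then L else nonl c)].
Proof.
move=> hp hr /=.
case: ifP => h /=.
  rewrite /cls /= lev_add; split => //.
  - by case: c h {hr} => //= _; rewrite /lev /=; lia.
  - by rewrite /lev /=; lia.
  - rewrite (_ : lev (0, -2)%Z (Z.of_nat p) = (-2)%Z); last by rewrite /lev /=; lia.
    rewrite lev_glin; lia.
rewrite /cls /= !lev_add.
rewrite (_ : lev (0, -1)%Z (Z.of_nat p) = (-1)%Z); last by rewrite /lev /=; lia.
rewrite lev_glin; split => //; lia.
Qed.

Lemma all_In (T : Type) (P : T -> bool) s x : all P s -> List.In x s -> P x.
Proof. elim: s => [|y s IH] //= /andP[hy hs] [<-|hx] //; exact: IH. Qed.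

Lemma drange_all (P : Z -> bool) z : all P drange -> (-5 <= z <= 5)%Z -> P z.
Proof.
move=> H hz; apply: (@all_In _ _ _ z H).
have E : (-5 = z \/ -4 = z \/ -3 = z \/ -2 = z \/ -1 = z \/ 0 = z \/ 1 = z \/ 2 = z
  \/ 3 = z \/ 4 = z \/ 5 = z)%Z by lia.
rewrite /drange /=; tauto.
Qed.

Lemma bools_all (P : bool -> bool) k : all P bools -> P k.
Proof. by case: k; rewrite /bools /= andbT => /andP[]. Qed.

Lemma kr_le p u x : 0 < p -> u 0 = L -> (kr p u x).1 <= x.
Proof. move=> hp h0; case: x => [|x] //; have := kr_lt p u x.+1 hp h0 erefl; lia. Qed.

Lemma rel p u a b c d : 1 < p -> is_fixed_point_limit p u ->
  let k := fun x => (kr p u x).1 in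
  let r := fun x => Z.of_nat (kr p u x).2 in
  [/\ dZ u L a b c d = (Z.of_nat p * dZ u L (k a) (k b) (k c) (k d)
        + (Z.of_nat p - 1) * dZ u M (k a) (k b) (k c) (k d) + (r b + r c - r a - r d))%Z,
      dZ u S a b c d = (dZ u L (k a) (k b) (k c) (k d) + dZ u M (k a) (k b) (k c) (k d))%Z &
      dZ u M a b c d = dZ u S (k a) (k b) (k c) (k d)].
Proof.
move=> hp hu k r.
have [a1 a2 a3] := kr_cnt p u a hp hu.
have [b1 b2 b3] := kr_cnt p u b hp hu.
have [c1 c2 c3] := kr_cnt p u c hp hu.
have [d1 d2 d3] := kr_cnt p u d hp hu.
rewrite /dZ /PZ /r /k.
split; lia.
Qed.

Lemma step p u mode X a b c d : 1 < p -> is_fixed_point_limit p u -> modeok mode p ->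
  check_allX X mode = true ->
  inXb X (st u (kr p u a).1 (kr p u b).1 (kr p u c).1 (kr p u d).1) = true ->
  (-5 <= dZ u L a b c d + dZ u S a b c d + dZ u M a b c d <= 5)%Z ->
  inXb X (st u a b c d) = true.
Proof.
move=> hp hu hm hX hin hsum.
have hp0 : 0 < p by lia.
have /and3P[hcs _ _] := inX_check X mode hX _ hin.
have [R1 R2 R3] := rel p u a b c d hp hu.
have [_ ea] := kr_inv p u a hp0.
have [_ eb] := kr_inv p u b hp0.
have [_ ec] := kr_inv p u c hp0.
have [_ ed] := kr_inv p u d hp0.
have La := kr_letter p u a hp hu.
have Lb := kr_letter p u b hp hu.
have Lc := kr_letter p u c hp hu.
have Ld := kr_letter p u d hp hu.
move: (kr p u a) (kr p u b) (kr p u c) (kr p u d) hcs hin R1 R2 R3 ea eb ec ed La Lb Lc Ld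
  => [ka ra] [kb rb] [kc rc] [kd rd] /= hcs hin R1 R2 R3 ea eb ec ed La Lb Lc Ld.
set dd := (dZ u L a b c d + dZ u S a b c d + dZ u M a b c d)%Z in hsum.
have T := drange_all _ _ (bools_all _ (~~ (rd.+1 < gn p (u kd)))
  (bools_all _ (~~ (rc.+1 < gn p (u kc)))
  (bools_all _ (~~ (rb.+1 < gn p (u kb)))
  (bools_all _ (~~ (ra.+1 < gn p (u ka))) hcs)))) hsum.
case Ea : (cls (~~ (ra.+1 < gn p (u ka))) (u ka)) => [[[va loa] hia] la].
have := cls_ok p (u ka) ra hp0 ea; rewrite /= Ea /= => -[hva hloa hhia hla].
case Eb : (cls (~~ (rb.+1 < gn p (u kb))) (u kb)) => [[[vb lob] hib] lb].
have := cls_ok p (u kb) rb hp0 eb; rewrite /= Eb /= => -[hvb hlob hhib hlb].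
case Ec : (cls (~~ (rc.+1 < gn p (u kc))) (u kc)) => [[[vc loc] hic] lc].
have := cls_ok p (u kc) rc hp0 ec; rewrite /= Ec /= => -[hvc hloc hhic hlc].
case Ed : (cls (~~ (rd.+1 < gn p (u kd))) (u kd)) => [[[vd lod] hid] ld].
have := cls_ok p (u kd) rd hp0 ed; rewrite /= Ed /= => -[hvd hlod hhid hld].
move: T; rewrite /trans_ok /st Ea Eb Ec Ed hva hvb hvc hvd.
rewrite (feas_sound _ _ _ p hm) //=; last first.
- rewrite !lev_add !lev_neg !lev_add !lev_neg /lev /=.
  rewrite /dd R1 R2 R3 /lev in hloa hhia hlob hhib hloc hhic hlod hhid *. nia.
- rewrite !lev_add !lev_neg !lev_add !lev_neg /lev /=.
  rewrite /dd R1 R2 R3 /lev in hloa hhia hlob hhib hloc hhic hlod hhid *. nia.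
rewrite La Lb Lc Ld -hla -hlb -hlc -hld.
have -> : dZ u L a b c d = (dd - (dZ u L ka kb kc kd + dZ u M ka kb kc kd) - dZ u S ka kb kc kd)%Z.
  rewrite /dd R2 R3; lia.
by rewrite R2 R3.
Qed.

Lemma dsum u a b c d :
  (dZ u L a b c d + dZ u S a b c d + dZ u M a b c d =
   Z.of_nat b - Z.of_nat a - Z.of_nat d + Z.of_nat c)%Z.
Proof.
have := cnt_sum u a; have := cnt_sum u b; have := cnt_sum u c; have := cnt_sum u d.
rewrite /dZ /PZ; lia.
Qed.

Definition Gc p u i : Z :=
  ((Z.of_nat p + 1) * PZ u L i + PZ u S i + Z.of_nat p * PZ u M i)%Z.

Lemma Gc_mono p u j i : 0 < p -> j <= i -> (Gc p u j + Z.of_nat (i - j) <= Gc p u i)%Z.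
Proof.
move=> hp hji; rewrite -(subnK hji); elim: (i - j) => [|n IH] //=.
  rewrite add0n; lia.
rewrite addSn /Gc /PZ /= in IH *.
case: (u (n + j)) => /=; nia.
Qed.

Lemma base_ok u mode X : is_fixed_point_limit 2 u \/ True -> check_allX X mode = true -> u 0 = L ->
  inXb X (st u 0 0 0 0) = true.
Proof.
move=> _ /andP[_ h0] hu0.
by rewrite /st /dZ /PZ /= hu0.
Qed.

Lemma mainind p u mode X : 1 < p -> is_fixed_point_limit p u -> modeok mode p ->
  check_allX X mode = true ->
  forall N a b c d, a + b + c + d <= N ->
  (-5 <= Z.of_nat b - Z.of_nat a - Z.of_nat d + Z.of_nat c <= 5)%Z ->
  inXb X (st u a b c d) = true.
Proof.
move=> hp hu hm hX.
have hp0 : 0 < p by lia.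
have hu0 := u0 p u hu.
elim=> [|N IH] a b c d hN hs.
  have [-> [-> [-> ->]]] : a = 0 /\ b = 0 /\ c = 0 /\ d = 0 by lia.
  exact: (base_ok u mode X (or_intror I) hX hu0).
case: (posnP (a + b + c + d)) => hpos.
  have [-> [-> [-> ->]]] : a = 0 /\ b = 0 /\ c = 0 /\ d = 0 by lia.
  exact: (base_ok u mode X (or_intror I) hX hu0).
have la := kr_le p u a hp0 hu0; have lb := kr_le p u b hp0 hu0.
have lc := kr_le p u c hp0 hu0; have ld := kr_le p u d hp0 hu0.
have hk : (kr p u a).1 + (kr p u b).1 + (kr p u c).1 + (kr p u d).1 <= N.
  have ta := kr_lt p u a hp0 hu0; have tb := kr_lt p u b hp0 hu0.
  have tc := kr_lt p u c hp0 hu0; have td := kr_lt p u d hp0 hu0.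
  case: (posnP a) => [a0|/ta ?]; case: (posnP b) => [b0|/tb ?];
  case: (posnP c) => [c0|/tc ?]; case: (posnP d) => [d0|/td ?]; lia.
have hsum : (-5 <= dZ u L a b c d + dZ u S a b c d + dZ u M a b c d <= 5)%Z by rewrite dsum.
have [R1 R2 R3] := rel p u a b c d hp hu.
have [_ ea] := kr_inv p u a hp0.
have [_ eb] := kr_inv p u b hp0.
have [_ ec] := kr_inv p u c hp0.
have [_ ed] := kr_inv p u d hp0.
set ka := (kr p u a).1 in hk la R1 R2 R3 ea *.
set kb := (kr p u b).1 in hk lb R1 R2 R3 eb *.
set kc := (kr p u c).1 in hk lc R1 R2 R3 ec *.
set kd := (kr p u d).1 in hk ld R1 R2 R3 ed *.
set s' := (Z.of_nat kb - Z.of_nat ka - Z.of_nat kd + Z.of_nat kc)%Z.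
case: (Z_le_gt_dec s' 5) => h1; case: (Z_le_gt_dec (-5) s') => h2.
- apply: (step p u mode X a b c d hp hu hm hX) => //.
  by apply: IH.
-
  set e := Z.to_nat (- s' - 5).
  set x := minn ka e; set y := e - x.
  have hy : y <= kd by rewrite /y /x /e /s'; lia.
  have H'' := IH (ka - x) kb kc (kd - y) ltac:(lia) ltac:(rewrite /y /x /e /s'; lia).
  have /and3P[_ hov _] := inX_check X mode hX _ H''.
  have hs5 : (dZ u L (ka - x) kb kc (kd - y) + dZ u S (ka - x) kb kc (kd - y)
              + dZ u M (ka - x) kb kc (kd - y) = -5)%Z by rewrite dsum /y /x /e /s'; lia.
  move: hov; rewrite /ovf_ok /st hs5 /= => hov.
  have := allnn_sound mode _ p hm hov.
  rewrite !(lev_add, lev_neg, lev_glin).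
  have -> : lev ((dZ u L (ka - x) kb kc (kd - y) + dZ u M (ka - x) kb kc (kd - y))%Z,
              (dZ u L (ka - x) kb kc (kd - y) + dZ u S (ka - x) kb kc (kd - y))%Z) (Z.of_nat p)
     = (Gc p u kb - Gc p u (ka - x) - Gc p u (kd - y) + Gc p u kc)%Z
    by rewrite /lev /dZ /Gc /=; ring.
  have -> : lev (0, -1)%Z (Z.of_nat p) = (-1)%Z by rewrite /lev /=; ring.
  have -> : lev (0, 4)%Z (Z.of_nat p) = 4%Z by rewrite /lev /=; ring.
  have E1 : (dZ u L a b c d + dZ u S a b c d + dZ u M a b c d =
     Gc p u kb - Gc p u ka - Gc p u kd + Gc p u kc
     + (Z.of_nat (kr p u b).2 + Z.of_nat (kr p u c).2 - Z.of_nat (kr p u a).2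
        - Z.of_nat (kr p u d).2))%Z.
    rewrite R1 R2 R3 /dZ /Gc; ring.
  have g1 := Gc_mono p u (ka - x) ka hp0 ltac:(lia).
  have g2 := Gc_mono p u (kd - y) kd hp0 ltac:(lia).
  move: hsum; rewrite E1.
  move: g1 g2 eb ec.
  move: (Gc p u ka) (Gc p u kb) (Gc p u kc) (Gc p u kd) (Gc p u (ka - x)) (Gc p u (kd - y)).
  move: (gn p (u kb)) (gn p (u kc)) ((kr p u a).2) ((kr p u b).2) ((kr p u c).2) ((kr p u d).2).
  rewrite /y /x /e /s'; lia.
-
  set e := Z.to_nat (s' - 5).
  set x := minn kb e; set y := e - x.
  have hy : y <= kc by rewrite /y /x /e /s'; lia.
  have H'' := IH ka (kb - x) (kc - y) kd ltac:(lia) ltac:(rewrite /y /x /e /s'; lia).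
  have /and3P[_ hov _] := inX_check X mode hX _ H''.
  have hs5 : (dZ u L ka (kb - x) (kc - y) kd + dZ u S ka (kb - x) (kc - y) kd
              + dZ u M ka (kb - x) (kc - y) kd = 5)%Z by rewrite dsum /y /x /e /s'; lia.
  move: hov; rewrite /ovf_ok /st hs5 /= => /andP[hov _].
  have := allnn_sound mode _ p hm hov.
  rewrite !(lev_add, lev_neg, lev_glin).
  have -> : lev ((dZ u L ka (kb - x) (kc - y) kd + dZ u M ka (kb - x) (kc - y) kd)%Z,
              (dZ u L ka (kb - x) (kc - y) kd + dZ u S ka (kb - x) (kc - y) kd)%Z) (Z.of_nat p)
     = (Gc p u (kb - x) - Gc p u ka - Gc p u kd + Gc p u (kc - y))%Z
    by rewrite /lev /dZ /Gc /=; ring.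
  have -> : lev (0, 1)%Z (Z.of_nat p) = 1%Z by rewrite /lev /=; ring.
  have -> : lev (0, 4)%Z (Z.of_nat p) = 4%Z by rewrite /lev /=; ring.
  have E1 : (dZ u L a b c d + dZ u S a b c d + dZ u M a b c d =
     Gc p u kb - Gc p u ka - Gc p u kd + Gc p u kc
     + (Z.of_nat (kr p u b).2 + Z.of_nat (kr p u c).2 - Z.of_nat (kr p u a).2
        - Z.of_nat (kr p u d).2))%Z.
    rewrite R1 R2 R3 /dZ /Gc; ring.
  have g1 := Gc_mono p u (kb - x) kb hp0 ltac:(lia).
  have g2 := Gc_mono p u (kc - y) kc hp0 ltac:(lia).
  move: hsum; rewrite E1.
  move: g1 g2 ea ed.
  move: (Gc p u ka) (Gc p u kb) (Gc p u kc) (Gc p u kd) (Gc p u (kb - x)) (Gc p u (kc - y)).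
  move: (gn p (u ka)) (gn p (u kd)) ((kr p u a).2) ((kr p u b).2) ((kr p u c).2) ((kr p u d).2).
  rewrite /y /x /e /s'; lia.
- lia.
Qed.

Lemma occ_factor u a i n : occ a (factor u i n) + cnt u a i = cnt u a (i + n).
Proof.
rewrite /occ /factor; elim: n => [|n IH]; first by rewrite addn0.
by rewrite mkseqS -cats1 count_cat /= addnS /= -IH addn0 addnAC.
Qed.

Theorem theorem6p1 (p : nat) (u : nat -> letter) :
  1 < p -> is_fixed_point_limit p u ->
  forall (v w : seq letter) (i j : nat),
    v = factor u i (size v) -> w = factor u j (size w) ->
    size v = size w ->
    occ L v <= occ L w + 3 /\ occ L w <= occ L v + 3.
Proof.
move=> hp hu v w i j hv hw hs.
set n := size v in hv hs.
rewrite -hs in hw.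
have [mode hm hX] : exists2 mode, modeok mode p & check_allX (Xset mode) mode = true.
  case: (boolP (p == 2)) => h2.
  - by exists true; [move/eqP: h2 | exact: check2].
  - by exists false; [rewrite /modeok; move/eqP: h2; lia | exact: check3].
have H := mainind p u mode (Xset mode) hp hu hm hX _ i (i + n) j (j + n) (leqnn _)
  ltac:(lia).
have /and3P[_ _ hf] := inX_check _ _ hX _ H.
move: hf; rewrite /fin_ok /st dsum.
have -> : (Z.of_nat (i + n) - Z.of_nat i - Z.of_nat (j + n) + Z.of_nat j =? 0)%Z = true
  by apply/Z.eqb_eq; lia.
move=> /= /andP[/Z.leb_le h1 /Z.leb_le h2].
have e1 := occ_factor u L i n.
have e2 := occ_factor u L j n.
rewrite hv hw.
move: h1 h2; rewrite /dZ /PZ; lia.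
Qed.
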